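(* Let $\alpha\in(1,2)$, $\sigma=1-\alpha/2$, $T>0$, $N$ a positive integer, $\tau=T/N$, $t_j=j\tau$ and $t_{k+\sigma}=t_k+\sigma\tau$. Let $k\in\{1,2,\dots,N-1\}$ and suppose $p\in C^{4}[t_0,t_{k+1}]$. Define $$r_k={}_C\mathrm{D}_{0,t}^\alpha p(t)\big|_{t=t_{k+\sigma}}-\mathcal{D}p(t)\big|_{t=t_{k+\sigma}},\qquad \mathcal{D}p(t)\big|_{t=t_{k+\sigma}}=\frac{1}{\Gamma(2-\alpha)}\sum_{l=0}^{k}c_l^{(k,\alpha)}\,\delta_t^2p^{k-l}.$$ Then $$|r_k|\leq\frac{1}{\Gamma(3-\alpha)}\max_{t_0\leq t\leq t_{k+1}}|p^{(4)}(t)|\Big[\frac{5\,t_{k+\sigma}^{2-\alpha}}{6}\tau^2-\frac{5}{8}\Big(\sigma+\frac{1}{2}\Big)^{2-\alpha}\tau^{4-\alpha}\Big].$$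
   Context: For $\alpha\in(1,2)$ the Caputo derivative is ${}_C\mathrm{D}_{0,t}^\alpha p(t)=\frac{1}{\Gamma(2-\alpha)}\int_0^t p''(s)(t-s)^{1-\alpha}\,\mathrm{d}s$. Write $p^j=p(t_j)$, $\delta_tp^{j-\frac12}=(p^j-p^{j-1})/\tau$, $\delta_t^2p^0=\frac{2}{\tau}\big[\delta_tp^{\frac12}-p'(t_0)\big]$, and $\delta_t^2p^j=(\delta_tp^{j+\frac12}-\delta_tp^{j-\frac12})/\tau$ for $j\ge1$. For integers $k\ge1$ define $a_1^{(k,\alpha)}=\frac32\tau^{2-\alpha}\int_0^{1/2}(s-\frac13)(k+\sigma-s)^{1-\alpha}\,\mathrm{d}s$; $a_l^{(k,\alpha)}=\tau^{2-\alpha}\int_0^1(s-\frac12)(k+\sigma-l+\frac32-s)^{1-\alpha}\,\mathrm{d}s$ for $2\le l\le k$; $b_l^{(k,\alpha)}=\tau^{2-\alpha}\int_0^1(\frac32-s)(k+\sigma-l+\frac12-s)^{1-\alpha}\,\mathrm{d}s$ for $1\le l\le k-1$; $b_k^{(k,\alpha)}=\tau^{2-\alpha}\int_0^{\sigma+1/2}s^{1-\alpha}\,\mathrm{d}s$; $c_l^{(k,\alpha)}=a_{k-l}^{(k,\alpha)}+b_{k-l}^{(k,\alpha)}$ for $0\le l\le k-1$, and $c_k^{(k,\alpha)}=\frac32\tau^{2-\alpha}\int_0^{1/2}(1-s)(k+\sigma-s)^{1-\alpha}\,\mathrm{d}s$. *)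

(* Defs.v *)
From Stdlib Require Import Reals.
From Coquelicot Require Import Coquelicot.
Open Scope R_scope.

Definition Gamma (z : R) : R :=
  RInt_gen (fun x => Rpower x (z - 1) * exp (- x)) (at_right 0) (Rbar_locally p_infty).

Definition deriv_on (a b : R) (f f' : R -> R) : Prop :=
  forall t, a <= t <= b ->
    filterlim (fun h => (f (t + h) - f t) / h)
      (within (fun h => h <> 0 /\ a <= t + h <= b) (locally 0))
      (locally (f' t)).

Definition cont_on (a b : R) (f : R -> R) : Prop :=
  forall t, a <= t <= b ->
    filterlim f (within (fun x => a <= x <= b) (locally t)) (locally (f t)).

Definition C4_on (a b : R) (p p1 p2 p3 p4 : R -> R) : Prop :=
  deriv_on a b p p1 /\ deriv_on a b p1 p2 /\ deriv_on a b p2 p3 /\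
  deriv_on a b p3 p4 /\ cont_on a b p4.

(** max_{a<=t<=b} |g t| (taken as the supremum, attained for continuous g) *)
Definition max_abs_on (a b : R) (g : R -> R) : R :=
  real (Lub_Rbar (fun y => exists t, a <= t <= b /\ y = Rabs (g t))).

Definition caputo (alpha : R) (p2 : R -> R) (t : R) : R :=
  / Gamma (2 - alpha) *
  RInt_gen (fun s => p2 s * Rpower (t - s) (1 - alpha)) (at_point 0) (at_left t).

Definition sigma_of (alpha : R) : R := 1 - alpha / 2.

Definition coef_a (alpha tau : R) (k l : nat) : R :=
  let sg := sigma_of alpha in
  if Nat.eqb l 1 then
    3 / 2 * Rpower tau (2 - alpha) *
    RInt (fun s => (s - 1 / 3) * Rpower (INR k + sg - s) (1 - alpha)) 0 (1 / 2)
  else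
    Rpower tau (2 - alpha) *
    RInt (fun s => (s - 1 / 2) * Rpower (INR k + sg - INR l + 3 / 2 - s) (1 - alpha)) 0 1.

Definition coef_b (alpha tau : R) (k l : nat) : R :=
  let sg := sigma_of alpha in
  if Nat.eqb l k then
    Rpower tau (2 - alpha) *
    RInt_gen (fun s => Rpower s (1 - alpha)) (at_right 0) (at_point (sg + 1 / 2))
  else
    Rpower tau (2 - alpha) *
    RInt (fun s => (3 / 2 - s) * Rpower (INR k + sg - INR l + 1 / 2 - s) (1 - alpha)) 0 1.

Definition coef_c (alpha tau : R) (k l : nat) : R :=
  let sg := sigma_of alpha in
  if Nat.ltb l k then coef_a alpha tau k (k - l) + coef_b alpha tau k (k - l)
  else
    3 / 2 * Rpower tau (2 - alpha) *
    RInt (fun s => (1 - s) * Rpower (INR k + sg - s) (1 - alpha)) 0 (1 / 2).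

(** delta_t p^{j-1/2} = (p^j - p^{j-1})/tau, grid t_j = j tau *)
Definition dt (p : R -> R) (tau : R) (j : nat) : R :=
  (p (INR j * tau) - p (INR (j - 1) * tau)) / tau.

(** delta_t^2 p^j; dp0 = p'(t_0) *)
Definition dt2 (p : R -> R) (dp0 tau : R) (j : nat) : R :=
  match j with
  | O => 2 / tau * (dt p tau 1 - dp0)
  | S _ => (dt p tau (j + 1) - dt p tau j) / tau
  end.

Definition discrete_caputo (alpha tau : R) (p : R -> R) (dp0 : R) (k : nat) : R :=
  / Gamma (2 - alpha) *
  sum_f_R0 (fun l => coef_c alpha tau k l * dt2 p dp0 tau (k - l)) k.

(* Main.v *)
Require Import Defs.
From Stdlib Require Import Reals Lra Lia Psatz FunctionalExtensionality.
From Coquelicot Require Import Coquelicot.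
Open Scope R_scope.

Lemma ballR (x : R) (e : posreal) (y : R) : ball x e y <-> Rabs (y - x) < e.
Proof. split; intro H; exact H. Qed.

Lemma rp_pos x y : 0 < x -> 0 < Rpower x y.
Proof. intros _; unfold Rpower; apply exp_pos. Qed.

Lemma rp_le_base x y e : 0 < x -> x <= y -> 0 <= e -> Rpower x e <= Rpower y e.
Proof.
  intros Hx Hxy He. unfold Rpower. destruct (Req_dec e 0) as [->|Hne].
  - rewrite !Rmult_0_l; lra.
  - destruct (Req_dec x y) as [->|Hn]; [lra|].
    left; apply exp_increasing. apply Rmult_lt_compat_l; [lra|].
    apply ln_increasing; lra.
Qed.

Lemma rp_lt_base x y e : 0 < x -> x < y -> 0 < e -> Rpower x e < Rpower y e.
Proof.
  intros Hx Hxy He. unfold Rpower. apply exp_increasing. apply Rmult_lt_compat_l; [lra|].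
  apply ln_increasing; lra.
Qed.

Lemma rp_le_base_neg x y e : 0 < x -> x <= y -> e <= 0 -> Rpower y e <= Rpower x e.
Proof.
  intros Hx Hxy He. unfold Rpower.
  destruct (Req_dec x y) as [->|Hn]; [lra|].
  destruct (Req_dec e 0) as [->|Hne]; [rewrite !Rmult_0_l; lra|].
  left; apply exp_increasing.
  assert (ln x < ln y) by (apply ln_increasing; lra). nra.
Qed.

Lemma rp_inv_pow x e : 0 < x -> 0 < e -> Rpower (Rpower x (/ e)) e = x.
Proof.
  intros Hx He. rewrite Rpower_mult. replace (/ e * e) with 1 by (field; lra).
  apply Rpower_1; lra.
Qed.

Lemma is_derive_rp x y : 0 < x -> is_derive (fun x => Rpower x y) x (y * Rpower x (y - 1)).
Proof. intros Hx. apply is_derive_Reals. apply derivable_pt_lim_power; lra. Qed.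

Lemma rp_lim_left c g : 0 < g ->
  filterlim (fun u => Rpower (c - u) g) (at_left c) (locally 0).
Proof.
  intros Hg. apply filterlim_locally. intros eps.
  assert (Hd : 0 < Rpower eps (/ g)) by (apply rp_pos; apply cond_pos).
  exists (mkposreal _ Hd). intros u Hu Hlt. apply ballR. apply ballR in Hu. simpl in Hu.
  rewrite Rminus_0_r. rewrite Rabs_pos_eq by (left; apply rp_pos; lra).
  rewrite <- (rp_inv_pow eps g) by (try apply cond_pos; lra).
  apply rp_lt_base; [lra| |lra].
  change (Rabs (u - c) < Rpower eps (/ g)) in Hu. rewrite Rabs_left in Hu; lra.
Qed.

Lemma rp_lim_right g : 0 < g ->
  filterlim (fun u => Rpower u g) (at_right 0) (locally 0).
Proof.
  intros Hg. apply filterlim_locally. intros eps.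
  assert (Hd : 0 < Rpower eps (/ g)) by (apply rp_pos; apply cond_pos).
  exists (mkposreal _ Hd). intros u Hu Hlt. apply ballR. apply ballR in Hu. simpl in Hu.
  rewrite Rminus_0_r. rewrite Rabs_pos_eq by (left; apply rp_pos; lra).
  rewrite <- (rp_inv_pow eps g) by (try apply cond_pos; lra).
  apply rp_lt_base; [lra| |lra].
  change (Rabs (u - 0) < Rpower eps (/ g)) in Hu. rewrite Rminus_0_r, Rabs_pos_eq in Hu; lra.
Qed.

Lemma deriv_int a b f f' t : deriv_on a b f f' -> a < t < b -> is_derive f t (f' t).
Proof.
  intros H Ht. apply is_derive_Reals. intros eps Heps.
  specialize (H t ltac:(lra)). rewrite filterlim_locally in H.
  destruct (H (mkposreal eps Heps)) as [d Hd].
  assert (Hd' : 0 < Rmin d (Rmin (t - a) (b - t))).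
  { apply Rmin_pos; [apply cond_pos|apply Rmin_pos; lra]. }
  exists (mkposreal _ Hd'). intros h Hh0 Hh. simpl in Hh.
  assert (Hb : Rabs h < d) by (eapply Rlt_le_trans; [exact Hh| apply Rmin_l]).
  assert (Hb2 : Rabs h < Rmin (t - a) (b - t)) by (eapply Rlt_le_trans; [exact Hh| apply Rmin_r]).
  assert (Ha1 := Rmin_l (t - a) (b - t)). assert (Ha2 := Rmin_r (t - a) (b - t)).
  assert (Hdom : h <> 0 /\ a <= t + h <= b).
  { split; auto. destruct (Rabs_def2 h _ Hb2). lra. }
  specialize (Hd h). assert (Hball : ball 0 d h).
  { change (Rabs (h - 0) < d). rewrite Rminus_0_r; auto. }
  specialize (Hd Hball Hdom). exact Hd.
Qed.

Lemma deriv_cont a b f f' : deriv_on a b f f' -> cont_on a b f.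
Proof.
  intros H t Ht. specialize (H t Ht). rewrite filterlim_locally in H.
  destruct (H (mkposreal 1 Rlt_0_1)) as [d Hd].
  apply filterlim_locally. intros eps.
  assert (Hp : 0 < Rmin d (eps / (Rabs (f' t) + 1))).
  { apply Rmin_pos; [apply cond_pos|]. apply Rdiv_lt_0_compat; [apply cond_pos|].
    generalize (Rabs_pos (f' t)); lra. }
  exists (mkposreal _ Hp). intros x Hx Hxd. change R in x. simpl in Hx.
  change (Rabs (x - t) < Rmin d (eps / (Rabs (f' t) + 1))) in Hx.
  change (Rabs (f x - f t) < eps).
  destruct (Req_dec x t) as [->|Hne].
  { rewrite Rminus_diag, Rabs_R0. apply cond_pos. }
  assert (Hb : Rabs (x - t) < d) by (eapply Rlt_le_trans; [exact Hx| apply Rmin_l]).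
  assert (Hb2 : Rabs (x - t) < eps / (Rabs (f' t) + 1)) by (eapply Rlt_le_trans; [exact Hx| apply Rmin_r]).
  specialize (Hd (x - t)).
  assert (Hball : ball 0 d (x - t)).
  { change (Rabs (x - t - 0) < d). rewrite Rminus_0_r; auto. }
  assert (Hdom : x - t <> 0 /\ a <= t + (x - t) <= b).
  { split; [lra|]. replace (t + (x - t)) with x by ring. auto. }
  specialize (Hd Hball Hdom).
  change (Rabs ((f (t + (x - t)) - f t) / (x - t) - f' t) < 1) in Hd.
  replace (t + (x - t)) with x in Hd by ring.
  set (q := (f x - f t) / (x - t)) in Hd.
  assert (Hq : f x - f t = q * (x - t)) by (unfold q; field; lra).
  rewrite Hq, Rabs_mult.
  assert (Hq2 : Rabs q <= Rabs (f' t) + 1).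
  { replace q with ((q - f' t) + f' t) by ring.
    eapply Rle_trans; [apply Rabs_triang|]. lra. }
  assert (0 < Rabs (f' t) + 1) by (generalize (Rabs_pos (f' t)); lra).
  assert (Rabs (x - t) * (Rabs (f' t) + 1) < eps).
  { apply (Rmult_lt_compat_r (Rabs (f' t) + 1)) in Hb2; auto.
    unfold Rdiv in Hb2. rewrite Rmult_assoc, Rinv_l in Hb2 by lra. lra. }
  generalize (Rabs_pos q) (Rabs_pos (x - t)). nra.
Qed.

Definition clampf (a b : R) (f : R -> R) (x : R) := f (Rmax a (Rmin b x)).

Lemma clamp_lip a b x y : a <= b ->
  Rabs (Rmax a (Rmin b x) - Rmax a (Rmin b y)) <= Rabs (x - y).
Proof.
  intros Hab. unfold Rmax, Rmin.
  repeat destruct Rle_dec; unfold Rabs; repeat destruct Rcase_abs; lra.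
Qed.

Lemma clamp_in a b x : a <= b -> a <= Rmax a (Rmin b x) <= b.
Proof. intros Hab. unfold Rmax, Rmin. repeat destruct Rle_dec; lra. Qed.

Lemma clamp_id a b x : a <= x <= b -> Rmax a (Rmin b x) = x.
Proof. intros Hx. unfold Rmax, Rmin. repeat destruct Rle_dec; lra. Qed.

Lemma clamp_cont a b f : a <= b -> cont_on a b f -> forall x, continuous (clampf a b f) x.
Proof.
  intros Hab H x. unfold clampf. set (y := Rmax a (Rmin b x)).
  assert (Hy := clamp_in a b x Hab). fold y in Hy.
  specialize (H y Hy). rewrite filterlim_locally in H.
  apply filterlim_locally. intros eps. destruct (H eps) as [d Hd].
  exists d. intros z Hz. apply Hd.
  - change (Rabs (Rmax a (Rmin b z) - y) < d). unfold y.
    eapply Rle_lt_trans; [apply clamp_lip; auto|]. exact Hz.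
  - apply clamp_in; auto.
Qed.

Lemma clamp_derive a b f f' x : deriv_on a b f f' -> a < x < b -> is_derive (clampf a b f) x (f' x).
Proof.
  intros H Hx. apply (is_derive_ext_loc f). 2: apply (deriv_int a b); auto.
  assert (Hp : 0 < Rmin (x - a) (b - x)) by (apply Rmin_pos; lra).
  exists (mkposreal _ Hp). intros y Hy. change (Rabs (y - x) < Rmin (x - a) (b - x)) in Hy.
  assert (Ha1 := Rmin_l (x - a) (b - x)). assert (Ha2 := Rmin_r (x - a) (b - x)).
  unfold clampf. rewrite clamp_id; auto. destruct (Rabs_def2 _ _ Hy); lra.
Qed.

Lemma clamp_eq a b f x : a <= x <= b -> clampf a b f x = f x.
Proof. intros; unfold clampf; rewrite clamp_id; auto. Qed.

Lemma mono_lemma a b phi phi' : a <= b ->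
  (forall x, a < x < b -> is_derive phi x (phi' x)) ->
  cont_on a b phi ->
  (forall x, a < x < b -> 0 <= phi' x) -> phi a <= phi b.
Proof.
  intros Hab Hd Hc Hp. destruct (Req_dec a b) as [->|Hne]; [lra|].
  set (g := clampf a b phi).
  destruct (MVT_gen g a b (fun x => Rmax 0 (phi' x))) as [c [Hc1 Hc2]].
  - intros x Hx. rewrite Rmin_left, Rmax_right in Hx by lra.
    rewrite Rmax_right by (apply Hp; lra).
    apply (is_derive_ext_loc phi).
    + assert (Hq : 0 < Rmin (x - a) (b - x)) by (apply Rmin_pos; lra).
      exists (mkposreal _ Hq). intros y Hy. change (Rabs (y - x) < Rmin (x - a) (b - x)) in Hy.
      assert (Ha1 := Rmin_l (x - a) (b - x)). assert (Ha2 := Rmin_r (x - a) (b - x)).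
      unfold g, clampf. rewrite clamp_id; auto. destruct (Rabs_def2 _ _ Hy); lra.
    + apply Hd; lra.
  - intros x _. apply continuity_pt_filterlim. apply clamp_cont; auto.
  - unfold g, clampf in Hc2. rewrite !clamp_id in Hc2 by lra.
    assert (0 <= Rmax 0 (phi' c)) by apply Rmax_l. nra.
Qed.

Lemma cont_on_plus a b f g : cont_on a b f -> cont_on a b g -> cont_on a b (fun x => f x + g x).
Proof.
  intros Hf Hg t Ht. apply (filterlim_comp_2 (G := locally (f t)) (H := locally (g t)) f g Rplus).
  - apply Hf; auto.
  - apply Hg; auto.
  - apply (filterlim_plus (f t) (g t)).
Qed.

Lemma cont_on_scal a b f c : cont_on a b f -> cont_on a b (fun x => c * f x).
Proof.
  intros Hf t Ht. apply (filterlim_comp _ _ _ f (fun y => c * y) _ (locally (f t))).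
  - apply Hf; auto.
  - apply (filterlim_scal_r c (f t)).
Qed.

Lemma cont_on_cont a b f : (forall x, continuous f x) -> cont_on a b f.
Proof.
  intros H t Ht. eapply filterlim_filter_le_1; [|apply H].
  intros P HP. destruct HP as [e He]. exists e. intros y Hy _. apply He; auto.
Qed.

Lemma grw a b u u' U U' : a <= b ->
  (forall x, a < x < b -> is_derive u x (u' x)) ->
  (forall x, a < x < b -> is_derive U x (U' x)) ->
  cont_on a b u -> cont_on a b U ->
  (forall x, a < x < b -> Rabs (u' x) <= U' x) ->
  Rabs (u b - u a) <= U b - U a.
Proof.
  intros Hab Hu HU Hcu HcU Hb.
  assert (H1 : U a - u a <= U b - u b).
  { apply (mono_lemma a b (fun x => U x - u x) (fun x => U' x - u' x)); auto.
    - intros x Hx. apply (is_derive_minus U u); auto.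
    - replace (fun x => U x - u x) with (fun x => U x + (-1) * u x)
        by (apply functional_extensionality; intro; ring).
      apply cont_on_plus; auto. apply cont_on_scal; auto.
    - intros x Hx. specialize (Hb x Hx). generalize (Rle_abs (u' x)) (Rle_abs (- u' x)); rewrite Rabs_Ropp; lra. }
  assert (H2 : U a + u a <= U b + u b).
  { apply (mono_lemma a b (fun x => U x + u x) (fun x => U' x + u' x)); auto.
    - intros x Hx. apply (is_derive_plus U u); auto.
    - apply cont_on_plus; auto.
    - intros x Hx. specialize (Hb x Hx). generalize (Rle_abs (u' x)) (Rle_abs (- u' x)); rewrite Rabs_Ropp; lra. }
  apply Rabs_le; lra.
Qed.

Lemma cont_on_sub a b a' b' f : cont_on a b f -> a <= a' -> b' <= b -> cont_on a' b' f.
Proof.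
  intros H Ha Hb t Ht. eapply filterlim_filter_le_1; [|apply H; lra].
  intros P HP. destruct HP as [e He]. exists e. intros y Hy Hd. apply He; auto. lra.
Qed.

Lemma cont_of_derive (f : R -> R) (l s : R) : is_derive f s l -> continuous f s.
Proof.
  intros H. pose proof (ex_derive_continuous (K:=R_AbsRing) (V:=R_NormedModule) f s (ex_intro _ l H)) as H'.
  exact H'.
Qed.

Lemma isd_add f g s df dg : is_derive f s df -> is_derive g s dg ->
  is_derive (fun x => f x + g x) s (df + dg).
Proof. intros H1 H2. apply (is_derive_plus f g); auto. Qed.

Lemma U_up_derive K y n s : is_derive (fun s => K * (s - y) ^ (S n) / INR (S n)) s (K * (s - y) ^ n).
Proof.
  auto_derive; auto. assert (INR (S n) <> 0) by (apply not_0_INR; lia).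
  change (match n with 0%nat => 1 | S _ => INR n + 1 end) with (INR (S n)).
  change (s + - y) with (s - y). field; auto.
Qed.

Lemma U_dn_derive K y n s : is_derive (fun s => - (K * (y - s) ^ (S n) / INR (S n))) s (K * (y - s) ^ n).
Proof.
  auto_derive; auto. assert (INR (S n) <> 0) by (apply not_0_INR; lia).
  change (match n with 0%nat => 1 | S _ => INR n + 1 end) with (INR (S n)).
  change (y + - s) with (y - s). field; auto.
Qed.

Lemma tay_step (a b : R) (f f' P P' : R -> R) (K : R) (n : nat) (y : R) :
  a <= y <= b -> deriv_on a b f f' ->
  (forall s : R, is_derive P s (P' s)) ->
  f y + P y = 0 ->
  (forall s, a < s < b -> Rabs (f' s + P' s) <= K * Rabs (s - y) ^ n) ->
  forall x, a <= x <= b -> Rabs (f x + P x) <= K * Rabs (x - y) ^ (S n) / INR (S n).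
Proof.
  intros Hy Hd HP H0 Hb x Hx.
  assert (Hcu : cont_on a b (fun s => f s + P s)).
  { apply cont_on_plus; [eapply deriv_cont; eauto|].
    apply cont_on_cont. intro s. eapply cont_of_derive; apply HP. }
  assert (HS : 0 < INR (S n)) by (apply lt_0_INR; lia).
  destruct (Rle_dec y x) as [Hyx|Hxy].
  - pose proof (grw y x (fun s => f s + P s) (fun s => f' s + P' s)
      (fun s => K * (s - y) ^ (S n) / INR (S n)) (fun s => K * (s - y) ^ n) Hyx) as G.
    cbv beta in G. rewrite H0 in G. rewrite Rminus_0_r in G.
    replace (y - y) with 0 in G by ring. rewrite pow_i in G by lia.
    rewrite (Rabs_pos_eq (x - y)) by lra.
    replace (K * 0 / INR (S n)) with 0 in G by (field; lra).
    rewrite Rminus_0_r in G. apply G.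
    + intros s Hs. apply isd_add; [apply (deriv_int a b); auto; lra| apply HP].
    + intros s Hs. apply U_up_derive.
    + eapply cont_on_sub; eauto; lra.
    + apply cont_on_cont. intro s. eapply cont_of_derive; apply U_up_derive.
    + intros s Hs. eapply Rle_trans; [apply Hb; lra|]. rewrite Rabs_pos_eq by lra. lra.
  - pose proof (grw x y (fun s => f s + P s) (fun s => f' s + P' s)
      (fun s => - (K * (y - s) ^ (S n) / INR (S n))) (fun s => K * (y - s) ^ n)) as G.
    cbv beta in G. rewrite H0 in G.
    replace (y - y) with 0 in G by ring. rewrite pow_i in G by lia.
    rewrite <- Rabs_Ropp. replace (- (f x + P x)) with (0 - (f x + P x)) by ring.
    rewrite Rabs_left1 with (a := x - y) by lra.
    replace (- (x - y)) with (y - x) by ring.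
    replace (- (K * 0 / INR (S n)) - - (K * (y - x) ^ S n / INR (S n)))
      with (K * (y - x) ^ S n / INR (S n)) in G by (field; lra).
    apply G.
    + lra.
    + intros s Hs. apply isd_add; [apply (deriv_int a b); auto; lra| apply HP].
    + intros s Hs. apply U_dn_derive.
    + eapply cont_on_sub; eauto; lra.
    + apply cont_on_cont. intro s. eapply cont_of_derive; apply U_dn_derive.
    + intros s Hs. eapply Rle_trans; [apply Hb; lra|]. rewrite Rabs_left1 by lra.
      replace (- (s - y)) with (y - s) by ring. lra.
Qed.

Section Taylor.
Variables (a b : R) (p p1 p2 p3 p4 : R -> R) (M : R).
Hypothesis HC : C4_on a b p p1 p2 p3 p4.
Hypothesis HM : forall x, a <= x <= b -> Rabs (p4 x) <= M.

Lemma tay1 x y : a <= x <= b -> a <= y <= b -> Rabs (p3 x - p3 y) <= M * Rabs (x - y).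
Proof.
  intros Hx Hy. destruct HC as [D0 [D1 [D2 [D3 C4]]]].
  pose proof (tay_step a b p3 p4 (fun _ => - p3 y) (fun _ => 0) M 0 y Hy D3) as H.
  cbv beta in H. simpl in H.
  replace (p3 x - p3 y) with (p3 x + - p3 y) by ring.
  eapply Rle_trans; [apply H; auto|right; field].
  - intros s. auto_derive; auto.
  - ring.
  - intros s Hs. rewrite Rplus_0_r, Rmult_1_r. apply HM; lra.
Qed.

Lemma tay2 x y : a <= x <= b -> a <= y <= b ->
  Rabs (p2 x - p2 y - p3 y * (x - y)) <= M * (x - y) ^ 2 / 2.
Proof.
  intros Hx Hy. destruct HC as [D0 [D1 [D2 [D3 C4]]]].
  pose proof (tay_step a b p2 p3 (fun s => - p2 y - p3 y * (s - y)) (fun _ => - p3 y) M 1 y Hy D2) as H.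
  cbv beta in H.
  replace (p2 x - p2 y - p3 y * (x - y)) with (p2 x + (- p2 y - p3 y * (x - y))) by ring.
  eapply Rle_trans; [apply H; auto| right; rewrite pow2_abs; simpl; field].
  - intros s. auto_derive; auto. ring.
  - ring.
  - intros s Hs. rewrite pow_1. replace (p3 s + - p3 y) with (p3 s - p3 y) by ring.
    apply tay1; lra.
Qed.

Lemma tay3 x y : a <= x <= b -> a <= y <= b ->
  Rabs (p1 x - p1 y - p2 y * (x - y) - p3 y * (x - y) ^ 2 / 2) <= M / 2 * Rabs (x - y) ^ 3 / 3.
Proof.
  intros Hx Hy. destruct HC as [D0 [D1 [D2 [D3 C4]]]].
  pose proof (tay_step a b p1 p2 (fun s => - p1 y - p2 y * (s - y) - p3 y * (s - y) ^ 2 / 2)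
     (fun s => - p2 y - p3 y * (s - y)) (M / 2) 2 y Hy D1) as H.
  cbv beta in H.
  replace (p1 x - p1 y - p2 y * (x - y) - p3 y * (x - y) ^ 2 / 2)
    with (p1 x + (- p1 y - p2 y * (x - y) - p3 y * (x - y) ^ 2 / 2)) by ring.
  eapply Rle_trans; [apply H; auto| right; simpl; field].
  - intros s. auto_derive; auto. field.
  - field.
  - intros s Hs. replace (p2 s + (- p2 y - p3 y * (s - y))) with (p2 s - p2 y - p3 y * (s - y)) by ring.
    rewrite pow2_abs. replace (M / 2 * (s - y) ^ 2) with (M * (s - y) ^ 2 / 2) by field.
    apply tay2; lra.
Qed.

Lemma tay4 x y : a <= x <= b -> a <= y <= b ->
  Rabs (p x - p y - p1 y * (x - y) - p2 y * (x - y) ^ 2 / 2 - p3 y * (x - y) ^ 3 / 6)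
  <= M * (x - y) ^ 4 / 24.
Proof.
  intros Hx Hy. destruct HC as [D0 [D1 [D2 [D3 C4]]]].
  pose proof (tay_step a b p p1 (fun s => - p y - p1 y * (s - y) - p2 y * (s - y) ^ 2 / 2 - p3 y * (s - y) ^ 3 / 6)
     (fun s => - p1 y - p2 y * (s - y) - p3 y * (s - y) ^ 2 / 2) (M / 6) 3 y Hy D0) as H.
  cbv beta in H.
  replace (p x - p y - p1 y * (x - y) - p2 y * (x - y) ^ 2 / 2 - p3 y * (x - y) ^ 3 / 6)
    with (p x + (- p y - p1 y * (x - y) - p2 y * (x - y) ^ 2 / 2 - p3 y * (x - y) ^ 3 / 6)) by ring.
  eapply Rle_trans; [apply H; auto| right; replace (Rabs (x - y) ^ 4) with ((Rabs (x - y) ^ 2) ^ 2) by ring;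
       rewrite pow2_abs; simpl; field].
  - intros s. auto_derive; auto. field.
  - field.
  - intros s Hs. replace (p1 s + (- p1 y - p2 y * (s - y) - p3 y * (s - y) ^ 2 / 2))
      with (p1 s - p1 y - p2 y * (s - y) - p3 y * (s - y) ^ 2 / 2) by ring.
    replace (M / 6 * Rabs (s - y) ^ 3) with (M / 2 * Rabs (s - y) ^ 3 / 3) by field.
    apply tay3; lra.
Qed.

End Taylor.

Definition convex (D : R -> Prop) := forall x y z, D x -> D z -> x <= y <= z -> D y.

Lemma mk_gen (f : R -> R) Fa Fb (FFa : Filter Fa) (FFb : Filter Fb) (If : R * R -> R) (l : R) :
  filter_prod Fa Fb (fun ab => is_RInt f (fst ab) (snd ab) (If ab)) ->
  filterlim If (filter_prod Fa Fb) (locally l) -> is_RInt_gen f Fa Fb l.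
Proof.
  intros H1 H2 P HP. unfold filtermapi.
  specialize (H2 P HP). unfold filtermap in H2.
  generalize (filter_and _ _ H1 H2). apply filter_imp.
  intros ab [Ha Hb]. exists (If ab). split; auto.
Qed.

Lemma gen_bound (f : R -> R) Fa Fb (FFa : ProperFilter Fa) (FFb : ProperFilter Fb) (l LB : R) :
  is_RInt_gen f Fa Fb l ->
  filter_prod Fa Fb (fun ab => forall v, is_RInt f (fst ab) (snd ab) v -> Rabs v <= LB) ->
  Rabs l <= LB.
Proof.
  intros H Hb. destruct (Rle_dec (Rabs l) LB) as [|Hn]; auto. exfalso.
  assert (He : 0 < Rabs l - LB) by lra.
  specialize (H (ball l (mkposreal _ He))). unfold filtermapi in H.
  assert (HH : filter_prod Fa Fb (fun x => exists y, is_RInt f (fst x) (snd x) y /\ ball l (mkposreal _ He) y)).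
  { apply H. apply locally_ball. }
  generalize (filter_and _ _ HH Hb). intros H3.
  destruct (filter_ex (F := filter_prod Fa Fb) _ H3) as [ab [[y [Hy1 Hy2]] Hb2]].
  specialize (Hb2 y Hy1). change (Rabs (y - l) < Rabs l - LB) in Hy2.
  assert (Rabs l <= Rabs y + Rabs (y - l)).
  { replace l with (y - (y - l)) at 1 by ring. eapply Rle_trans; [apply Rabs_triang|].
    rewrite Rabs_Ropp. lra. }
  lra.
Qed.

Lemma gen_lower (f : R -> R) Fa Fb (FFa : ProperFilter Fa) (FFb : ProperFilter Fb) (l LB : R) :
  is_RInt_gen f Fa Fb l ->
  filter_prod Fa Fb (fun ab => forall v, is_RInt f (fst ab) (snd ab) v -> LB <= v) ->
  LB <= l.
Proof.
  intros H Hb. destruct (Rle_dec LB l) as [|Hn]; auto. exfalso.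
  assert (He : 0 < LB - l) by lra.
  specialize (H (ball l (mkposreal _ He))). unfold filtermapi in H.
  assert (HH : filter_prod Fa Fb (fun x => exists y, is_RInt f (fst x) (snd x) y /\ ball l (mkposreal _ He) y)).
  { apply H. apply locally_ball. }
  generalize (filter_and _ _ HH Hb). intros H3.
  destruct (filter_ex (F := filter_prod Fa Fb) _ H3) as [ab [[y [Hy1 Hy2]] Hb2]].
  specialize (Hb2 y Hy1). change (Rabs (y - l) < LB - l) in Hy2.
  destruct (Rabs_def2 _ _ Hy2). lra.
Qed.

Lemma exR_cont (f : R -> R) a b : (forall z, Rmin a b <= z <= Rmax a b -> continuous f z) -> ex_RInt f a b.
Proof. intros H. exact (ex_RInt_continuous (V := R_CompleteNormedModule) f a b H). Qed.

Lemma cont_ext_loc (f g : R -> R) x : locally x (fun y => f y = g y) -> continuous f x -> continuous g x.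
Proof.
  intros Hl Hc. intros P HP.
  assert (Hfx : f x = g x) by (apply locally_singleton in Hl; auto).
  rewrite <- Hfx in HP. specialize (Hc P HP). unfold filtermap in *.
  generalize (filter_and _ _ Hl Hc). apply filter_imp. intros y [H1 H2]. rewrite <- H1; auto.
Qed.

Lemma int_anti (g G : R -> R) a b :
  (forall x, Rmin a b <= x <= Rmax a b -> is_derive G x (g x)) ->
  (forall x, Rmin a b <= x <= Rmax a b -> continuous g x) ->
  is_RInt g a b (G b - G a).
Proof.
  intros H1 H2. pose proof (is_RInt_derive (V := R_CompleteNormedModule) G g a b H1 H2) as H. exact H.
Qed.

Lemma convex_sub D a b x : convex D -> D a -> D b -> Rmin a b <= x <= Rmax a b -> D x.
Proof.
  intros Hc Ha Hb Hx. unfold Rmin, Rmax in Hx. destruct Rle_dec.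
  - apply (Hc a x b); auto.
  - apply (Hc b x a); auto; lra.
Qed.

Lemma filterlim_Rminus (Lb La : R) :
  filterlim (fun z : R * R => fst z - snd z) (filter_prod (locally Lb) (locally La)) (locally (Lb - La)).
Proof.
  rewrite filterlim_locally. intros eps.
  assert (He : 0 < eps / 2) by (generalize (cond_pos eps); lra).
  apply (Filter_prod _ _ _ (ball Lb (mkposreal _ He)) (ball La (mkposreal _ He))).
  - apply locally_ball.
  - apply locally_ball.
  - intros x y Hx Hy. change (Rabs (x - Lb) < eps / 2) in Hx. change (Rabs (y - La) < eps / 2) in Hy.
    change (Rabs (x - y - (Lb - La)) < eps).
    replace (x - y - (Lb - La)) with ((x - Lb) - (y - La)) by ring.
    eapply Rle_lt_trans; [apply Rabs_triang|]. rewrite Rabs_Ropp. lra.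
Qed.

Lemma gen_from_anti Fa Fb (FFa : Filter Fa) (FFb : Filter Fb) (g G : R -> R) (D : R -> Prop) (La Lb : R) :
  convex D -> Fa D -> Fb D ->
  (forall x, D x -> is_derive G x (g x)) -> (forall x, D x -> continuous g x) ->
  filterlim G Fa (locally La) -> filterlim G Fb (locally Lb) ->
  is_RInt_gen g Fa Fb (Lb - La).
Proof.
  intros Hc HDa HDb Hd Hg HLa HLb.
  apply (mk_gen g Fa Fb FFa FFb (fun ab => G (snd ab) - G (fst ab))).
  - apply (Filter_prod _ _ _ D D HDa HDb). intros x y Hx Hy. simpl.
    apply int_anti; intros z Hz; [apply Hd|apply Hg]; apply (convex_sub D x y); auto.
  - apply (filterlim_comp_2 (G := locally Lb) (H := locally La) (fun ab => G (snd ab)) (fun ab => G (fst ab)) Rminus).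
    + eapply filterlim_comp; [apply filterlim_snd|]. exact HLb.
    + eapply filterlim_comp; [apply filterlim_fst|]. exact HLa.
    + apply filterlim_Rminus.
Qed.

Lemma int_dom_bound (f g G : R -> R) (D : R -> Prop) x y :
  convex D -> D x -> D y ->
  (forall x, D x -> continuous f x) ->
  (forall x, D x -> is_derive G x (g x)) -> (forall x, D x -> continuous g x) ->
  (forall x, D x -> Rabs (f x) <= g x) ->
  ex_RInt f x y /\ Rabs (RInt f x y) <= Rabs (G y - G x).
Proof.
  intros Hc Hx Hy Hf Hd Hg Hb.
  assert (Hex : forall a b, D a -> D b -> ex_RInt f a b).
  { intros a b Ha Hb'. apply exR_cont. intros z Hz. apply Hf. apply (convex_sub D a b); auto. }
  assert (Hle : forall a b, D a -> D b -> a <= b -> Rabs (RInt f a b) <= G b - G a).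
  { intros a b Ha Hb' Hab.
    assert (HI : is_RInt g a b (G b - G a)).
    { apply int_anti; intros z Hz; [apply Hd|apply Hg]; apply (convex_sub D a b); auto. }
    eapply Rle_trans; [apply abs_RInt_le; auto|].
    rewrite <- (is_RInt_unique g a b _ HI).
    apply RInt_le; auto.
    - apply (ex_RInt_norm f a b); auto.
    - eexists; eauto.
    - intros z Hz. apply Hb. apply (Hc a z b); auto; lra. }
  split; [apply Hex; auto|].
  destruct (Rle_dec x y) as [Hxy|Hxy].
  - eapply Rle_trans; [apply Hle; auto|]. apply Rle_abs.
  - rewrite <- opp_RInt_swap by (apply Hex; auto). change (Rabs (- RInt f y x) <= Rabs (G y - G x)).
    rewrite Rabs_Ropp. eapply Rle_trans; [apply Hle; auto; lra|].
    rewrite <- Rabs_Ropp. replace (- (G y - G x)) with (G x - G y) by ring. apply Rle_abs.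
Qed.

Lemma cmp_exists Fa Fb (FFa : ProperFilter Fa) (FFb : ProperFilter Fb) (f g G : R -> R) (D : R -> Prop) (La Lb : R) :
  convex D -> Fa D -> Fb D ->
  (forall x, D x -> continuous f x) ->
  (forall x, D x -> is_derive G x (g x)) -> (forall x, D x -> continuous g x) ->
  (forall x, D x -> Rabs (f x) <= g x) ->
  filterlim G Fa (locally La) -> filterlim G Fb (locally Lb) ->
  exists l, is_RInt_gen f Fa Fb l.
Proof.
  intros Hc HDa HDb Hf Hd Hg Hb HLa HLb.
  set (If := fun ab : R * R => RInt f (fst ab) (snd ab)).
  assert (Hcau : exists y, filterlim If (filter_prod Fa Fb) (locally y)).
  { apply (filterlim_locally_cauchy (F := filter_prod Fa Fb)). intros eps.
    assert (He4 : 0 < eps / 4) by (generalize (cond_pos eps); lra).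
    rewrite filterlim_locally in HLa. rewrite filterlim_locally in HLb.
    specialize (HLa (mkposreal _ He4)). specialize (HLb (mkposreal _ He4)).
    exists (fun ab => D (fst ab) /\ D (snd ab) /\ Rabs (G (fst ab) - La) < eps / 4 /\ Rabs (G (snd ab) - Lb) < eps / 4).
    split.
    - apply (Filter_prod _ _ _ (fun a => D a /\ ball La (mkposreal _ He4) (G a)) (fun b => D b /\ ball Lb (mkposreal _ He4) (G b))).
      + apply filter_and; auto.
      + apply filter_and; auto.
      + intros x y [Hx1 Hx2] [Hy1 Hy2]. simpl. repeat split; auto.
    - intros [u1 u2] [v1 v2] [Hu1 [Hu2 [Hu3 Hu4]]] [Hv1 [Hv2 [Hv3 Hv4]]]. simpl in *.
      change (Rabs (If (v1, v2) - If (u1, u2)) < eps). unfold If; simpl.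
      destruct (int_dom_bound f g G D u1 v1) as [E1 B1]; auto.
      destruct (int_dom_bound f g G D v1 v2) as [E2 B2]; auto.
      destruct (int_dom_bound f g G D v2 u2) as [E3 B3]; auto.
      assert (HC : RInt f u1 u2 = RInt f u1 v1 + (RInt f v1 v2 + RInt f v2 u2)).
      { assert (E4 : ex_RInt f v1 u2) by (apply (ex_RInt_Chasles f v1 v2 u2); auto).
        rewrite <- (RInt_Chasles f u1 v1 u2); auto.
        rewrite <- (RInt_Chasles f v1 v2 u2); auto. }
      rewrite HC.
      replace (RInt f v1 v2 - (RInt f u1 v1 + (RInt f v1 v2 + RInt f v2 u2)))
        with (- (RInt f u1 v1 + RInt f v2 u2)) by ring.
      rewrite Rabs_Ropp. eapply Rle_lt_trans; [apply Rabs_triang|].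
      assert (Rabs (G v1 - G u1) < eps / 2).
      { replace (G v1 - G u1) with ((G v1 - La) - (G u1 - La)) by ring.
        eapply Rle_lt_trans; [apply Rabs_triang|]. rewrite Rabs_Ropp. lra. }
      assert (Rabs (G u2 - G v2) < eps / 2).
      { replace (G u2 - G v2) with ((G u2 - Lb) - (G v2 - Lb)) by ring.
        eapply Rle_lt_trans; [apply Rabs_triang|]. rewrite Rabs_Ropp. lra. }
      lra. }
  destruct Hcau as [l Hl]. exists l.
  apply (mk_gen f Fa Fb _ _ If l); auto.
  apply (Filter_prod _ _ _ D D HDa HDb). intros x y Hx Hy. unfold If; simpl.
  apply (RInt_correct (V := R_CompleteNormedModule)). apply exR_cont. intros z Hz. apply Hf. apply (convex_sub D x y); auto.
Qed.

Lemma isd_mul (f g : R -> R) (x df dg : R) : is_derive f x df -> is_derive g x dg ->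
  is_derive (fun t => f t * g t) x (df * g x + f x * dg).
Proof.
  rewrite !is_derive_Reals. intros H1 H2. exact (derivable_pt_lim_mult f g x df dg H1 H2).
Qed.

Lemma isd_comp (f g : R -> R) (x df dg : R) : is_derive g x dg -> is_derive f (g x) df ->
  is_derive (fun t => f (g t)) x (df * dg).
Proof.
  rewrite !is_derive_Reals. intros H1 H2. exact (derivable_pt_lim_comp g f x dg df H1 H2).
Qed.

Lemma isd_exp (x : R) : is_derive exp x (exp x).
Proof. rewrite is_derive_Reals. apply derivable_pt_lim_exp. Qed.

Lemma isd_lin (a b x : R) : is_derive (fun t => a * t + b) x a.
Proof. auto_derive; auto; ring. Qed.

Lemma isd_ext (f g : R -> R) (x l l' : R) : (forall t, f t = g t) -> l = l' -> is_derive f x l -> is_derive g x l'.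
Proof. intros H1 H2 H3. subst l'. apply (is_derive_ext f g); auto. Qed.

Lemma isd_scal (f : R -> R) (c x l : R) : is_derive f x l -> is_derive (fun t => c * f t) x (c * l).
Proof.
  rewrite !is_derive_Reals. intros H. exact (derivable_pt_lim_scal f c x l H).
Qed.

Lemma isd_plus (f g : R -> R) (x l1 l2 : R) : is_derive f x l1 -> is_derive g x l2 ->
  is_derive (fun t => f t + g t) x (l1 + l2).
Proof. intros; apply (is_derive_plus f g); auto. Qed.

Lemma isd_expm (x : R) : is_derive (fun t => exp (- t)) x (- exp (- x)).
Proof.
  apply (isd_ext (fun t => exp (-1 * t + 0)) _ x (exp (-1 * x + 0) * -1)).
  - intros t; f_equal; ring.
  - rewrite Rplus_0_r. replace (-1 * x) with (- x) by ring. lra.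
  - apply (isd_comp exp (fun t => -1 * t + 0)). apply isd_lin. apply isd_exp.
Qed.

Lemma cont_mul (f g : R -> R) (x : R) : continuous f x -> continuous g x -> continuous (fun t => f t * g t) x.
Proof.
  intros H1 H2. apply continuity_pt_filterlim. apply continuity_pt_filterlim in H1.
  apply continuity_pt_filterlim in H2. exact (continuity_pt_mult f g x H1 H2).
Qed.

Lemma cont_plus (f g : R -> R) (x : R) : continuous f x -> continuous g x -> continuous (fun t => f t + g t) x.
Proof.
  intros H1 H2. apply continuity_pt_filterlim. apply continuity_pt_filterlim in H1.
  apply continuity_pt_filterlim in H2. exact (continuity_pt_plus f g x H1 H2).
Qed.

Lemma cont_cst (c x : R) : continuous (fun _ => c) x.
Proof. apply continuity_pt_filterlim. apply continuity_pt_const. intros a b; auto. Qed.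

Lemma lim_inv0 : filterlim (fun x => / x) (Rbar_locally p_infty) (locally 0).
Proof.
  rewrite filterlim_locally. intros eps. exists (/ eps). intros x Hx.
  assert (Hep := cond_pos eps). assert (0 < / eps) by (apply Rinv_0_lt_compat; auto).
  change (Rabs (/ x - 0) < eps). rewrite Rminus_0_r, Rabs_pos_eq by (left; apply Rinv_0_lt_compat; lra).
  rewrite <- (Rinv_inv eps). apply Rinv_lt_contravar; auto. nra.
Qed.

Lemma lim_at_point (f : R -> R) a : filterlim f (at_point a) (locally (f a)).
Proof. intros P HP. apply locally_singleton in HP. exact HP. Qed.

Lemma lim_squeeze0 {T} F (FF : Filter F) (f g : T -> R) :
  F (fun x => Rabs (f x) <= g x) -> filterlim g F (locally 0) -> filterlim f F (locally 0).
Proof.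
  intros H1 H2. rewrite filterlim_locally in *. intros eps. specialize (H2 eps).
  generalize (filter_and _ _ H1 H2). apply filter_imp. intros x [Ha Hb].
  change (Rabs (g x - 0) < eps) in Hb. change (Rabs (f x - 0) < eps).
  rewrite Rminus_0_r in *. generalize (Rle_abs (g x)). lra.
Qed.

Lemma lim_scal0 {T} F (FF : Filter F) (f : T -> R) c :
  filterlim f F (locally 0) -> filterlim (fun x => c * f x) F (locally 0).
Proof.
  intros H. apply (lim_squeeze0 F FF _ (fun x => Rabs c * Rabs (f x))).
  - apply filter_forall. intros x. rewrite Rabs_mult. lra.
  - rewrite filterlim_locally in *. intros eps.
    assert (Hp : 0 < eps / (Rabs c + 1)) by (apply Rdiv_lt_0_compat; [apply cond_pos|generalize (Rabs_pos c); lra]).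
    specialize (H (mkposreal _ Hp)). revert H. apply filter_imp.
    intros x Hx. change (Rabs (f x - 0) < eps / (Rabs c + 1)) in Hx.
    change (Rabs (Rabs c * Rabs (f x) - 0) < eps). rewrite Rminus_0_r in *.
    rewrite Rabs_pos_eq by (apply Rmult_le_pos; apply Rabs_pos).
    assert (0 <= Rabs c) by apply Rabs_pos.
    assert (Rabs (f x) * (Rabs c + 1) < eps).
    { apply (Rmult_lt_compat_r (Rabs c + 1)) in Hx; [|lra].
      unfold Rdiv in Hx. rewrite Rmult_assoc, Rinv_l in Hx by lra. lra. }
    generalize (Rabs_pos (f x)). nra.
Qed.

Lemma exp_m_lim : filterlim (fun x => exp (- x)) (Rbar_locally p_infty) (locally 0).
Proof.
  rewrite filterlim_locally. intros eps. exists (- ln eps). intros x Hx.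
  change (Rabs (exp (- x) - 0) < eps). rewrite Rminus_0_r, Rabs_pos_eq by (left; apply exp_pos).
  rewrite <- (exp_ln eps) by apply cond_pos. apply exp_increasing. lra.
Qed.

Lemma x_exp_bound x : 0 < x -> x * exp (- x) <= 4 / x.
Proof.
  intros Hx. assert (H1 : 1 + x / 2 < exp (x / 2)) by (apply exp_ineq1; lra).
  assert (H2 : exp x = exp (x / 2) * exp (x / 2)) by (rewrite <- exp_plus; f_equal; field).
  assert (H3 : exp (- x) = / exp x) by apply exp_Ropp.
  rewrite H3. assert (0 < exp x) by apply exp_pos.
  apply (Rmult_le_reg_r (exp x * x)). nra.
  field_simplify; try lra. nra.
Qed.

Section Gam.
Variable z : R.
Hypothesis Hz : 0 < z < 1.

Definition gf (s : R) (x : R) := Rpower x (s - 1) * exp (- x).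

Lemma gf_derive s x : 0 < x -> exists l, is_derive (gf s) x l.
Proof.
  intros Hx. eexists. unfold gf. apply isd_mul.
  - apply is_derive_rp; auto.
  - apply isd_expm.
Qed.

Lemma gf_cont s x : 0 < x -> continuous (gf s) x.
Proof. intros Hx. destruct (gf_derive s x Hx) as [l Hl]. eapply cont_of_derive; eauto. Qed.

Lemma gam_part1 : exists l1, is_RInt_gen (gf z) (at_right 0) (at_point 1) l1.
Proof.
  apply (cmp_exists _ _ (at_right_proper_filter 0) (at_point_filter 1) (gf z)
    (fun x => Rpower x (z - 1)) (fun x => / z * Rpower x z) (fun x => 0 < x) 0 (/ z * Rpower 1 z)).
  - intros x y w Hx Hw Hy; lra.
  - exists (mkposreal 1 Rlt_0_1). intros; auto.
  - unfold at_point; lra.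
  - intros x Hx. apply gf_cont; auto.
  - intros x Hx. apply (isd_ext (fun t => / z * Rpower t z) _ x (/ z * (z * Rpower x (z - 1)))); auto.
    + field; lra.
    + apply isd_scal. apply is_derive_rp; auto.
  - intros x Hx. eapply cont_of_derive. apply is_derive_rp; auto.
  - intros x Hx. unfold gf. rewrite Rabs_pos_eq.
    2: { apply Rmult_le_pos; left; [apply rp_pos; auto|apply exp_pos]. }
    assert (exp (- x) <= 1). { rewrite <- exp_0. destruct (Req_dec x 0); [lra|]. left; apply exp_increasing; lra. }
    assert (0 < Rpower x (z - 1)) by (apply rp_pos; auto). nra.
  - apply lim_scal0. apply _. apply rp_lim_right; lra.
  - apply (lim_at_point (fun x => / z * Rpower x z) 1).
Qed.

Lemma rp_half_bound x : 1 / 2 < x -> Rpower x (z - 1) <= 2.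
Proof.
  intros Hx. eapply Rle_trans; [apply (rp_le_base_neg (1/2)); lra|].
  unfold Rpower. replace 2 with (exp (ln 2)) at 2 by (apply exp_ln; lra).
  assert (Hl : ln (1 / 2) = - ln 2).
  { unfold Rdiv. rewrite Rmult_1_l, ln_Rinv by lra. auto. }
  rewrite Hl. assert (0 < ln 2) by (rewrite <- ln_1; apply ln_increasing; lra).
  destruct (Req_dec z 0); [lra|]. left; apply exp_increasing. nra.
Qed.

Lemma gam_part2 : exists l2, is_RInt_gen (gf z) (at_point 1) (Rbar_locally p_infty) l2.
Proof.
  apply (cmp_exists _ _ (at_point_filter 1) (Rbar_locally_filter p_infty) (gf z)
    (fun x => 2 * exp (- x)) (fun x => -2 * exp (- x)) (fun x => 1 / 2 < x) (-2 * exp (- 1)) 0).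
  - intros x y w Hx Hw Hy; lra.
  - unfold at_point; lra.
  - exists (1 / 2). intros; auto.
  - intros x Hx. apply gf_cont; lra.
  - intros x Hx. apply (isd_ext (fun t => -2 * exp (- t)) _ x (-2 * (- exp (- x)))); auto.
    + ring.
    + apply isd_scal. apply isd_expm.
  - intros x Hx. eapply cont_of_derive. apply isd_scal. apply isd_expm.
  - intros x Hx. unfold gf. rewrite Rabs_pos_eq.
    2: { apply Rmult_le_pos; left; [apply rp_pos; lra|apply exp_pos]. }
    assert (0 < exp (- x)) by apply exp_pos. generalize (rp_half_bound x Hx). nra.
  - apply (lim_at_point (fun x => -2 * exp (- x)) 1).
  - apply lim_scal0. apply _. apply exp_m_lim.
Qed.

Lemma rp_ge1 x : 0 < x <= 1 -> 1 <= Rpower x (z - 1).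
Proof.
  intros Hx. unfold Rpower.
  assert (ln x <= 0). { rewrite <- ln_1. destruct (Req_dec x 1) as [->|]; [lra|]. left; apply ln_increasing; lra. }
  apply Rle_trans with (exp 0); [rewrite exp_0; lra|].
  destruct (Req_dec ((z - 1) * ln x) 0) as [E|E]; [rewrite E; lra|].
  left; apply exp_increasing. nra.
Qed.

Lemma gam_exists : exists l, is_RInt_gen (gf z) (at_right 0) (Rbar_locally p_infty) l /\ 0 < l.
Proof.
  destruct gam_part1 as [l1 H1]. destruct gam_part2 as [l2 H2].
  exists (l1 + l2). split.
  - apply (is_RInt_gen_Chasles (gf z) 1 l1 l2); auto.
  - assert (L1 : exp (-1) / 2 <= l1).
    { apply (gen_lower (gf z) _ _ (at_right_proper_filter 0) (at_point_filter 1) l1); auto.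
      apply (Filter_prod _ _ _ (fun a => 0 < a < 1 / 2) (fun b => b = 1)).
      - exists (mkposreal (1/2) ltac:(lra)). intros y Hy Hy0. change (Rabs (y - 0) < 1/2) in Hy.
        rewrite Rminus_0_r in Hy. destruct (Rabs_def2 _ _ Hy). lra.
      - reflexivity.
      - intros a b Ha Hb v Hv. simpl in Hv. subst b.
        rewrite <- (is_RInt_unique _ _ _ _ Hv).
        assert (Hle : RInt (fun _ => exp (-1)) a 1 <= RInt (gf z) a 1).
        { apply RInt_le; try lra.
          - apply exR_cont. intros; apply continuous_const.
          - apply exR_cont. intros w Hw. rewrite Rmin_left, Rmax_right in Hw by lra. apply gf_cont; lra.
          - intros x Hx. unfold gf.
            assert (1 <= Rpower x (z - 1)) by (apply rp_ge1; lra).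
            assert (exp (-1) <= exp (- x)) by (left; apply exp_increasing; lra).
            assert (0 < exp (-1)) by apply exp_pos. nra. }
        rewrite RInt_const in Hle. change (scal (1 - a) (exp (-1))) with ((1 - a) * exp (-1)) in Hle.
        assert (0 < exp (-1)) by apply exp_pos. nra. }
    assert (L2 : 0 <= l2).
    { apply (gen_lower (gf z) _ _ (at_point_filter 1) (Rbar_locally_filter p_infty) l2); auto.
      apply (Filter_prod _ _ _ (fun a => a = 1) (fun b => 1 < b)).
      - reflexivity.
      - exists 1. auto.
      - intros a b Ha Hb v Hv. simpl in Hv. subst a.
        rewrite <- (is_RInt_unique _ _ _ _ Hv).
        assert (Hle : RInt (fun _ => 0) 1 b <= RInt (gf z) 1 b).
        { apply RInt_le; try lra.
          - apply exR_cont. intros; apply continuous_const.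
          - apply exR_cont. intros w Hw. rewrite Rmin_left, Rmax_right in Hw by lra. apply gf_cont; lra.
          - intros x Hx. unfold gf. apply Rmult_le_pos; left; [apply rp_pos; lra|apply exp_pos]. }
        rewrite RInt_const in Hle. change (scal (b - 1) 0) with ((b - 1) * 0) in Hle. lra. }
    assert (0 < exp (-1)) by apply exp_pos. lra.
Qed.

Lemma rp_le_x x : 1 <= x -> Rpower x z <= x.
Proof.
  intros Hx. rewrite <- (Rpower_1 x) at 2 by lra. apply Rle_Rpower; lra.
Qed.

Lemma gam_rec l : is_RInt_gen (gf z) (at_right 0) (Rbar_locally p_infty) l ->
  is_RInt_gen (gf (z + 1)) (at_right 0) (Rbar_locally p_infty) (z * l).
Proof.
  intros Hl.
  set (h := fun x => - (Rpower x z * exp (- x))).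
  set (h' := fun x => - (z * Rpower x (z - 1) * exp (- x) + Rpower x z * (- exp (- x)))).
  assert (Hh : is_RInt_gen h' (at_right 0) (Rbar_locally p_infty) (0 - 0)).
  { apply (gen_from_anti _ _ _ _ h' h (fun x => 0 < x)).
    - intros x y w Hx Hw Hy; lra.
    - exists (mkposreal 1 Rlt_0_1). intros; auto.
    - exists 0. auto.
    - intros x Hx. unfold h, h'.
      apply (isd_ext (fun t => -1 * (Rpower t z * exp (- t))) _ x (-1 * (z * Rpower x (z - 1) * exp (- x) + Rpower x z * (- exp (- x))))).
      + intros; ring.
      + ring.
      + apply isd_scal. apply (isd_mul (fun t => Rpower t z) (fun t => exp (- t)) x (z * Rpower x (z-1)) (- exp (- x))).
        apply is_derive_rp; auto. apply isd_expm.
    - intros x Hx.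
      replace h' with (fun x => (fun _ => -1) x * ((((fun _ => z) x * Rpower x (z - 1)) * exp (- x)) + Rpower x z * ((fun _ => -1) x * exp (- x)))).
      2: { apply functional_extensionality; intros t; unfold h'; ring. }
      assert (Ce : continuous (fun t => exp (- t)) x) by (eapply cont_of_derive; apply isd_expm).
      assert (C1 : continuous (fun t => Rpower t (z - 1)) x) by (eapply cont_of_derive; apply is_derive_rp; auto).
      assert (C2 : continuous (fun t => Rpower t z) x) by (eapply cont_of_derive; apply is_derive_rp; auto).
      repeat first [apply cont_mul | apply cont_plus | apply cont_cst | assumption].
    - apply (lim_squeeze0 _ _ _ (fun x => Rpower x z)).
      + exists (mkposreal 1 Rlt_0_1). intros x _ Hx. unfold h. rewrite Rabs_Ropp, Rabs_mult.
        rewrite (Rabs_pos_eq (exp _)) by (left; apply exp_pos).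
        rewrite Rabs_pos_eq by (left; apply rp_pos; auto).
        assert (exp (- x) <= 1). { rewrite <- exp_0. left; apply exp_increasing; lra. }
        assert (0 < Rpower x z) by (apply rp_pos; auto). nra.
      + apply rp_lim_right; lra.
    - apply (lim_squeeze0 _ _ _ (fun x => 4 * / x)).
      + exists 1. intros x Hx. unfold h. rewrite Rabs_Ropp, Rabs_mult.
        rewrite (Rabs_pos_eq (exp _)) by (left; apply exp_pos).
        rewrite Rabs_pos_eq by (left; apply rp_pos; lra).
        eapply Rle_trans; [|apply x_exp_bound; lra].
        apply Rmult_le_compat_r; [left; apply exp_pos|]. apply rp_le_x; lra.
      + apply lim_scal0. apply _. apply lim_inv0. }
  pose proof (is_RInt_gen_scal _ z l Hl) as Hs.
  pose proof (is_RInt_gen_plus _ _ _ _ Hh Hs) as Hp.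
  replace (z * l) with (plus (0 - 0) (scal z l)) by (change (0 - 0 + z * l = z * l); ring).
  apply (is_RInt_gen_ext (fun y => plus (h' y) (scal z (gf z y)))); auto.
  apply (Filter_prod _ _ _ (fun a => 0 < a) (fun b => 0 < b)).
  - exists (mkposreal 1 Rlt_0_1). intros; auto.
  - exists 0. auto.
  - intros a b Ha Hb x Hx. simpl in Hx.
    assert (0 < x) by (unfold Rmin in Hx; destruct Rle_dec; lra).
    change (h' x + z * gf z x = gf (z + 1) x). unfold h', gf.
    replace (z + 1 - 1) with z by ring. ring.
Qed.

End Gam.

Lemma cont_comp (f g : R -> R) (x : R) : continuous f x -> continuous g (f x) -> continuous (fun t => g (f t)) x.
Proof.
  intros H1 H2. apply continuity_pt_filterlim. apply continuity_pt_filterlim in H1.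
  apply continuity_pt_filterlim in H2. exact (continuity_pt_comp f g x H1 H2).
Qed.

Lemma cont_lin (a b x : R) : continuous (fun t => a * t + b) x.
Proof. eapply cont_of_derive. apply isd_lin. Qed.

Lemma isd_rpK (K g s : R) : s < K ->
  is_derive (fun t => Rpower (K - t) g) s (- (g * Rpower (K - s) (g - 1))).
Proof.
  intros Hs. apply (isd_ext (fun t => Rpower (-1 * t + K) g) _ s (g * Rpower (-1 * s + K) (g - 1) * -1)).
  - intros t. f_equal. ring.
  - replace (-1 * s + K) with (K - s) by ring. ring.
  - apply (isd_comp (fun y => Rpower y g) (fun t => -1 * t + K)). apply isd_lin.
    apply is_derive_rp. lra.
Qed.

Lemma cont_rpK (K g s : R) : s < K -> continuous (fun t => Rpower (K - t) g) s.
Proof. intros Hs. eapply cont_of_derive. apply isd_rpK; auto. Qed.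

Lemma int_w (K S g : R) : 0 < g -> 0 <= S < K ->
  is_RInt (fun s => Rpower (K - s) (g - 1)) 0 S ((Rpower K g - Rpower (K - S) g) / g).
Proof.
  intros Hg HS.
  assert (Hi : is_RInt (fun s => Rpower (K - s) (g - 1)) 0 S
     ((fun t => - / g * Rpower (K - t) g) S - (fun t => - / g * Rpower (K - t) g) 0)).
  { apply (int_anti _ (fun t => - / g * Rpower (K - t) g) 0 S).
    + intros x Hx. rewrite Rmin_left, Rmax_right in Hx by lra.
      apply (isd_ext (fun t => - / g * Rpower (K - t) g) _ x (- / g * - (g * Rpower (K - x) (g - 1)))).
      * auto.
      * field; lra.
      * apply isd_scal. apply isd_rpK. lra.
    + intros x Hx. rewrite Rmin_left, Rmax_right in Hx by lra. apply cont_rpK. lra. }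
  cbv beta in Hi. rewrite Rminus_0_r in Hi.
  replace ((Rpower K g - Rpower (K - S) g) / g) with (- / g * Rpower (K - S) g - - / g * Rpower K g)
    by (field; lra).
  exact Hi.
Qed.

Lemma piece_est (F L : R -> R) (K S E g : R) : 0 < g -> 0 < S < K ->
  (forall s, continuous F s) -> (forall s, continuous L s) ->
  (forall s, 0 <= s <= S -> Rabs (F s - L s) <= E) ->
  Rabs (RInt (fun s => F s * Rpower (K - s) (g - 1)) 0 S
        - RInt (fun s => L s * Rpower (K - s) (g - 1)) 0 S)
  <= E * ((Rpower K g - Rpower (K - S) g) / g).
Proof.
  intros Hg HS HF HL HE.
  assert (Hc : forall (G : R -> R), (forall s, continuous G s) -> ex_RInt (fun s => G s * Rpower (K - s) (g - 1)) 0 S).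
  { intros G HG. apply exR_cont. intros z Hz. rewrite Rmin_left, Rmax_right in Hz by lra.
    apply cont_mul; auto. apply cont_rpK. lra. }
  assert (Hw := int_w K S g Hg ltac:(lra)).
  rewrite <- (RInt_minus (V := R_CompleteNormedModule)) by (apply Hc; auto).
  eapply Rle_trans; [apply abs_RInt_le; [lra|]|].
  - apply (ex_RInt_minus (V := R_CompleteNormedModule)); apply Hc; auto.
  - rewrite <- (is_RInt_unique _ _ _ _ Hw).
    rewrite <- (RInt_scal (V := R_CompleteNormedModule)) by (eexists; eauto).
    apply RInt_le; [lra| | |].
    + apply ex_RInt_norm. apply (ex_RInt_minus (V := R_CompleteNormedModule)); apply Hc; auto.
    + apply (ex_RInt_scal (V := R_CompleteNormedModule)). eexists; eauto.
    + intros x Hx. change (Rabs (F x * Rpower (K - x) (g - 1) - L x * Rpower (K - x) (g - 1)) <= E * Rpower (K - x) (g - 1)).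
      replace (F x * Rpower (K - x) (g - 1) - L x * Rpower (K - x) (g - 1)) with ((F x - L x) * Rpower (K - x) (g - 1)) by ring.
      rewrite Rabs_mult. rewrite (Rabs_pos_eq (Rpower _ _)) by (left; apply rp_pos; lra).
      apply Rmult_le_compat_r; [left; apply rp_pos; lra|]. apply HE; lra.
Qed.

Lemma cov (F : R -> R) (a t K S g : R) : 0 < t -> 0 < S < K -> (forall x, continuous F x) ->
  RInt (fun u => F u * Rpower (a + K * t - u) (g - 1)) a (a + S * t)
  = Rpower t g * RInt (fun s => F (a + s * t) * Rpower (K - s) (g - 1)) 0 S.
Proof.
  intros Ht HS HF.
  assert (Hex : ex_RInt (fun u => F u * Rpower (a + K * t - u) (g - 1)) (t * 0 + a) (t * S + a)).
  { apply exR_cont. intros z Hz. rewrite Rmin_left, Rmax_right in Hz by nra.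
    apply cont_mul; auto. apply cont_rpK. nra. }
  pose proof (RInt_comp_lin (V := R_CompleteNormedModule) _ t a 0 S Hex) as H.
  replace (t * 0 + a) with a in H by ring. replace (t * S + a) with (a + S * t) in H by ring.
  rewrite <- H. rewrite <- (RInt_scal (V := R_CompleteNormedModule)).
  2: { apply exR_cont. intros z Hz. rewrite Rmin_left, Rmax_right in Hz by lra.
       apply cont_mul. apply (cont_comp (fun s => a + s * t)). 
       replace (fun s => a + s * t) with (fun s => t * s + a) by (apply functional_extensionality; intros; ring).
       apply cont_lin. auto. apply cont_rpK. lra. }
  apply RInt_ext. intros x Hx. rewrite Rmin_left, Rmax_right in Hx by lra.
  change (t * (F (t * x + a) * Rpower (a + K * t - (t * x + a)) (g - 1))
          = Rpower t g * (F (a + x * t) * Rpower (K - x) (g - 1))).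
  replace (t * x + a) with (a + x * t) by ring.
  replace (a + K * t - (a + x * t)) with (t * (K - x)) by ring.
  rewrite <- Rpower_mult_distr by lra.
  replace g with (1 + (g - 1)) at 3 by ring. rewrite Rpower_plus, Rpower_1 by lra. ring.
Qed.

Section Main.
Variables (alpha tau : R) (k : nat) (p p1 p2 p3 p4 : R -> R) (M : R).
Hypothesis Ha : 1 < alpha < 2.
Hypothesis Ht : 0 < tau.
Hypothesis Hk : (1 <= k)%nat.
Hypothesis HC : C4_on 0 (INR (k + 1) * tau) p p1 p2 p3 p4.
Hypothesis HM : forall x, 0 <= x <= INR (k + 1) * tau -> Rabs (p4 x) <= M.

Let T1 := INR (k + 1) * tau.
Let d j := dt2 p (p1 0) tau j.

Lemma T1_eq : T1 = INR k * tau + tau.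
Proof. unfold T1. rewrite plus_INR. simpl. ring. Qed.

Lemma k_ge1 : 1 <= INR k.
Proof. replace 1 with (INR 1) by reflexivity. apply le_INR; auto. Qed.

Lemma M_nonneg : 0 <= M.
Proof.
  assert (H := HM 0). assert (0 <= 0 <= INR (k + 1) * tau).
  { split; [lra|]. apply Rmult_le_pos; [apply pos_INR|lra]. }
  specialize (H H0). generalize (Rabs_pos (p4 0)). lra.
Qed.

Lemma eps0 : Rabs (d 0 - (p2 0 + p3 0 * tau / 3)) <= M * tau ^ 2 / 12.
Proof.
  assert (Hk1 := k_ge1). assert (HT := T1_eq).
  unfold d, dt2, dt. replace (INR 1) with 1 by reflexivity. replace (INR (1 - 1)) with 0 by reflexivity.
  pose proof (tay4 0 T1 p p1 p2 p3 p4 M HC HM tau 0 ltac:(nra) ltac:(nra)) as H.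
  rewrite Rminus_0_r in H. rewrite Rmult_1_l, Rmult_0_l.
  replace (2 / tau * ((p tau - p 0) / tau - p1 0) - (p2 0 + p3 0 * tau / 3))
    with (2 / tau ^ 2 * (p tau - p 0 - p1 0 * tau - p2 0 * tau ^ 2 / 2 - p3 0 * tau ^ 3 / 6))
    by (field; lra).
  rewrite Rabs_mult. rewrite (Rabs_pos_eq (2 / tau ^ 2)) by (apply Rlt_le, Rdiv_lt_0_compat; [lra|apply pow_lt; lra]).
  apply (Rmult_le_compat_l (2 / tau ^ 2)) in H; [|apply Rlt_le, Rdiv_lt_0_compat; [lra|apply pow_lt; lra]].
  eapply Rle_trans; [exact H|]. right. field. lra.
Qed.

Lemma epsj j : (1 <= j <= k)%nat -> Rabs (d j - p2 (INR j * tau)) <= M * tau ^ 2 / 12.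
Proof.
  intros Hj. destruct j as [|j']; [lia|].
  assert (Hk1 := k_ge1). assert (HT := T1_eq).
  assert (Hjk : INR (S j') <= INR k) by (apply le_INR; lia).
  assert (Hj1 : 1 <= INR (S j')) by (replace 1 with (INR 1) by reflexivity; apply le_INR; lia).
  set (y := INR (S j') * tau).
  unfold d, dt2, dt.
  replace (S j' + 1 - 1)%nat with (S j') by lia.
  replace (S j' - 1)%nat with j' by lia.
  rewrite plus_INR. replace (INR 1) with 1 by reflexivity.
  replace (INR j') with (INR (S j') - 1) by (rewrite S_INR; ring).
  fold y.
  replace ((INR (S j') + 1) * tau) with (y + tau) by (unfold y; ring).
  replace ((INR (S j') - 1) * tau) with (y + - tau) by (unfold y; ring).
  pose proof (tay4 0 T1 p p1 p2 p3 p4 M HC HM (y + tau) y ltac:(unfold y; nra) ltac:(unfold y; nra)) as H1.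
  pose proof (tay4 0 T1 p p1 p2 p3 p4 M HC HM (y + - tau) y ltac:(unfold y; nra) ltac:(unfold y; nra)) as H2.
  replace (y + tau - y) with tau in H1 by ring.
  replace (y + - tau - y) with (- tau) in H2 by ring.
  set (R1 := p (y + tau) - p y - p1 y * tau - p2 y * tau ^ 2 / 2 - p3 y * tau ^ 3 / 6) in H1.
  set (R2 := p (y + - tau) - p y - p1 y * - tau - p2 y * (- tau) ^ 2 / 2 - p3 y * (- tau) ^ 3 / 6) in H2.
  replace (((p (y + tau) - p y) / tau - (p y - p (y + - tau)) / tau) / tau - p2 y)
    with ((R1 + R2) / tau ^ 2) by (unfold R1, R2; field; lra).
  unfold Rdiv at 1. rewrite Rabs_mult. rewrite (Rabs_pos_eq (/ tau ^ 2)) by (apply Rlt_le, Rinv_0_lt_compat, pow_lt; lra).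
  assert (Rabs (R1 + R2) <= M * tau ^ 4 / 12).
  { eapply Rle_trans; [apply Rabs_triang|]. replace ((- tau) ^ 4) with (tau ^ 4) in H2 by ring. lra. }
  assert (0 < / tau ^ 2) by (apply Rinv_0_lt_compat, pow_lt; lra).
  apply (Rmult_le_compat_r (/ tau ^ 2)) in H; [|lra].
  eapply Rle_trans; [exact H|]. right. field. lra.
Qed.


Let sg := sigma_of alpha.
Let g := 2 - alpha.
Let c := INR k * tau + sg * tau.
Let P2 := clampf 0 T1 p2.

Lemma g_bounds : 0 < g < 1.
Proof. unfold g; lra. Qed.

Lemma sg_eq : sg = g / 2.
Proof. unfold sg, g, sigma_of; field. Qed.

Lemma T1_pos : 0 <= T1.
Proof. unfold T1. apply Rmult_le_pos; [apply pos_INR|lra]. Qed.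

Lemma P2_cont x : continuous P2 x.
Proof.
  unfold P2. apply clamp_cont; [apply T1_pos|]. destruct HC as [_ [_ [D2 _]]]. eapply deriv_cont; eauto.
Qed.

Lemma P2_eq x : 0 <= x <= T1 -> P2 x = p2 x.
Proof. intros; unfold P2; apply clamp_eq; auto. Qed.

Lemma cont_aff (a t x : R) : continuous (fun s => a + s * t) x.
Proof.
  apply (cont_of_derive _ t). apply (isd_ext (fun s => t * s + a) _ x t t); [intros; ring | reflexivity | apply isd_lin].
Qed.

Lemma F_cont (a : R) s : continuous (fun s => P2 (a + s * tau)) s.
Proof. apply (cont_comp (fun s => a + s * tau) P2). apply cont_aff. apply P2_cont. Qed.

Lemma abs_mul_le (u v U V : R) : Rabs u <= U -> Rabs v <= V -> Rabs (u * v) <= U * V.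
Proof.
  intros H1 H2. rewrite Rabs_mult. apply Rmult_le_compat; auto; apply Rabs_pos.
Qed.

Lemma RInt_lin2 (f1 f2 : R -> R) (a b c1 c2 : R) : ex_RInt f1 a b -> ex_RInt f2 a b ->
  RInt (fun x => c1 * f1 x + c2 * f2 x) a b = c1 * RInt f1 a b + c2 * RInt f2 a b.
Proof.
  intros H1 H2. apply is_RInt_unique.
  pose proof (RInt_correct (V := R_CompleteNormedModule) _ _ _ H1) as I1.
  pose proof (RInt_correct (V := R_CompleteNormedModule) _ _ _ H2) as I2.
  pose proof (is_RInt_scal _ _ _ c1 _ I1) as J1.
  pose proof (is_RInt_scal _ _ _ c2 _ I2) as J2.
  exact (is_RInt_plus _ _ _ _ _ _ J1 J2).
Qed.

Lemma ex_poly_w (q0 q1 K S : R) : 0 < S < K ->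
  ex_RInt (fun s => (q0 + q1 * s) * Rpower (K - s) (g - 1)) 0 S.
Proof.
  intros HS. apply exR_cont. intros z Hz. rewrite Rmin_left, Rmax_right in Hz by lra.
  apply cont_mul.
  - apply (cont_of_derive _ q1). apply (isd_ext (fun s => q1 * s + q0) _ z q1 q1); [intros; ring | reflexivity | apply isd_lin].
  - apply cont_rpK. lra.
Qed.

Lemma piece1_point s : 0 <= s <= 1 / 2 ->
  Rabs (P2 (0 + s * tau) - (3 / 2 * (s - 1 / 3) * d 1 + 3 / 2 * (1 - s) * d 0)) <= 5 / 6 * M * tau ^ 2.
Proof.
  intros Hs. assert (Hk1 := k_ge1). assert (HT := T1_eq). assert (HM0 := M_nonneg).
  rewrite Rplus_0_l. rewrite P2_eq by (unfold T1 in *; nra).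
  pose proof (tay2 0 T1 p p1 p2 p3 p4 M HC HM (s * tau) 0 ltac:(nra) ltac:(nra)) as H1.
  pose proof (tay2 0 T1 p p1 p2 p3 p4 M HC HM tau 0 ltac:(nra) ltac:(nra)) as H2.
  pose proof eps0 as E0. pose proof (epsj 1 ltac:(lia)) as E1.
  replace (INR 1 * tau) with tau in E1 by (simpl; ring).
  fold d in E0, E1.
  rewrite !Rminus_0_r in H1, H2.
  set (R1 := p2 (s * tau) - p2 0 - p3 0 * (s * tau)) in H1.
  set (R2 := p2 tau - p2 0 - p3 0 * tau) in H2.
  set (e0 := d 0 - (p2 0 + p3 0 * tau / 3)) in E0.
  set (e1 := d 1 - p2 tau) in E1.
  replace (p2 (s * tau) - (3 / 2 * (s - 1 / 3) * d 1 + 3 / 2 * (1 - s) * d 0))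
    with (R1 + (- (3 / 2 * (s - 1 / 3)) * (R2 + e1) + (- (3 / 2 * (1 - s))) * e0))
    by (unfold R1, R2, e0, e1; field).
  assert (B1 : Rabs (- (3 / 2 * (s - 1 / 3))) <= 1 / 2).
  { rewrite Rabs_Ropp. apply Rabs_le. lra. }
  assert (B2 : Rabs (- (3 / 2 * (1 - s))) <= 3 / 2).
  { rewrite Rabs_Ropp. apply Rabs_le. lra. }
  assert (B3 : Rabs (R2 + e1) <= M * tau ^ 2 / 2 + M * tau ^ 2 / 12).
  { eapply Rle_trans; [apply Rabs_triang|]. lra. }
  assert (T2 := abs_mul_le _ _ _ _ B1 B3).
  assert (T3 := abs_mul_le _ _ _ _ B2 E0).
  assert (HR1 : M * (s * tau) ^ 2 / 2 <= M * tau ^ 2 / 8).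
  { assert (s ^ 2 <= 1 / 4) by nra. replace ((s * tau) ^ 2) with (s ^ 2 * tau ^ 2) by ring.
    assert (0 <= tau ^ 2) by apply pow2_ge_0. assert (s ^ 2 * tau ^ 2 <= tau ^ 2 / 4) by nra.
    apply Rmult_le_compat_r with (r := / 2) in H0; [|lra]. unfold Rdiv. 
    apply Rmult_le_compat_l with (r := M) in H3; [|lra]. nra. }
  eapply Rle_trans; [apply Rabs_triang|].
  eapply Rle_trans; [apply Rplus_le_compat; [apply Rle_refl|apply Rabs_triang]|].
  assert (0 <= M * tau ^ 2) by (apply Rmult_le_pos; [lra|apply pow2_ge_0]).
  lra.
Qed.


Ltac rring := intros; cbv beta; match goal with |- ?a = ?b => change (@eq R a b) end; field.

Lemma cont_affine (q0 q1 x : R) (f : R -> R) : (forall s, f s = q1 * s + q0) -> continuous f x.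
Proof.
  intros Hf. apply (cont_of_derive _ q1). apply (isd_ext (fun s => q1 * s + q0) _ x q1 q1); [intros; rewrite Hf; ring | reflexivity | apply isd_lin].
Qed.

Lemma ex_fw (f : R -> R) (K S : R) : 0 < S < K -> (forall s, continuous f s) ->
  ex_RInt (fun s => f s * Rpower (K - s) (g - 1)) 0 S.
Proof.
  intros HS Hf. apply exR_cont. intros z Hz. rewrite Rmin_left, Rmax_right in Hz by lra.
  apply cont_mul; auto. apply cont_rpK. lra.
Qed.

Lemma coef_a1 : coef_a alpha tau k 1 =
  3 / 2 * Rpower tau g * RInt (fun s => (s - 1 / 3) * Rpower (INR k + sg - s) (g - 1)) 0 (1 / 2).
Proof.
  unfold coef_a. cbn [Nat.eqb]. cbv zeta. fold sg. unfold g. replace (2 - alpha - 1) with (1 - alpha) by ring.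
  reflexivity.
Qed.

Lemma coef_ck : coef_c alpha tau k k =
  3 / 2 * Rpower tau g * RInt (fun s => (1 - s) * Rpower (INR k + sg - s) (g - 1)) 0 (1 / 2).
Proof.
  unfold coef_c. rewrite Nat.ltb_irrefl. cbv zeta. fold sg. unfold g. replace (2 - alpha - 1) with (1 - alpha) by ring.
  reflexivity.
Qed.

Lemma piece1_final :
  Rabs (RInt (fun u => P2 u * Rpower (c - u) (g - 1)) 0 (tau / 2)
        - (coef_a alpha tau k 1 * d 1 + coef_c alpha tau k k * d 0))
  <= 5 / 6 * M * tau ^ 2 * (Rpower tau g * ((Rpower (INR k + sg) g - Rpower (INR k + sg - 1 / 2) g) / g)).
Proof.
  assert (Hk1 := k_ge1). assert (Hg := g_bounds). assert (Hsg := sg_eq).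
  set (K := INR k + sg).
  assert (HK : 1 / 2 < K) by (unfold K; lra).
  replace c with (0 + K * tau) by (unfold c, K; ring).
  replace (tau / 2) with (0 + 1 / 2 * tau) by field.
  rewrite (cov P2 0 tau K (1 / 2) g Ht ltac:(lra) P2_cont).
  rewrite coef_a1, coef_ck. fold K.
  set (w := fun s => Rpower (K - s) (g - 1)).
  set (L := fun s => 3 / 2 * (s - 1 / 3) * d 1 + 3 / 2 * (1 - s) * d 0).
  assert (HL : 3 / 2 * Rpower tau g * RInt (fun s => (s - 1 / 3) * w s) 0 (1 / 2) * d 1 +
               3 / 2 * Rpower tau g * RInt (fun s => (1 - s) * w s) 0 (1 / 2) * d 0
             = Rpower tau g * RInt (fun s => L s * w s) 0 (1 / 2)).
  { rewrite (RInt_ext (V := R_CompleteNormedModule) (fun s => L s * w s) (fun s => (3 / 2 * d 1) * ((s - 1 / 3) * w s) + (3 / 2 * d 0) * ((1 - s) * w s))).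
    2: { intros; unfold L; match goal with |- ?a = ?b => change (@eq R a b) end; ring. }
    rewrite RInt_lin2.
    - ring.
    - apply (ex_fw (fun s => s - 1 / 3)); [lra|]. intros; apply (cont_affine (-1/3) 1); intros; cbv beta.
field.
    - apply (ex_fw (fun s => 1 - s)); [lra|]. intros; apply (cont_affine 1 (-1)); rring. }
  unfold w in HL. rewrite HL.
  rewrite <- Rmult_minus_distr_l. rewrite Rabs_mult, (Rabs_pos_eq (Rpower tau g)) by (left; apply rp_pos; lra).
  assert (Hp := piece_est (fun s => P2 (0 + s * tau)) L K (1 / 2) (5 / 6 * M * tau ^ 2) g ltac:(lra) ltac:(lra)
     (F_cont 0) ltac:(intros; apply (cont_affine (3 / 2 * (-1/3) * d 1 + 3 / 2 * d 0) (3 / 2 * d 1 - 3 / 2 * d 0)); unfold L; rring)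
     ltac:(intros; apply piece1_point; auto)).
  assert (0 < Rpower tau g) by (apply rp_pos; lra).
  apply (Rmult_le_compat_l (Rpower tau g)) in Hp; [|lra].
  eapply Rle_trans; [exact Hp|]. right; ring.
Qed.


Lemma piecej_point j s : (2 <= j <= k)%nat -> 0 <= s <= 1 ->
  Rabs (P2 ((INR j - 3 / 2) * tau + s * tau) - (d j * (s - 1 / 2) + d (j - 1)%nat * (3 / 2 - s)))
  <= 5 / 6 * M * tau ^ 2.
Proof.
  intros Hj Hs. assert (Hk1 := k_ge1). assert (HT := T1_eq). assert (HM0 := M_nonneg).
  assert (Hjk : INR j <= INR k) by (apply le_INR; lia).
  assert (Hj2 : 2 <= INR j) by (replace 2 with (INR 2) by reflexivity; apply le_INR; lia).
  set (A := (INR j - 1) * tau).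
  replace ((INR j - 3 / 2) * tau + s * tau) with (A + (s - 1 / 2) * tau) by (unfold A; field).
  rewrite P2_eq by (unfold A; split; nra).
  pose proof (tay2 0 T1 p p1 p2 p3 p4 M HC HM (A + (s - 1 / 2) * tau) A ltac:(unfold A; split; nra) ltac:(unfold A; split; nra)) as H1.
  pose proof (tay2 0 T1 p p1 p2 p3 p4 M HC HM (INR j * tau) A ltac:(split; nra) ltac:(unfold A; split; nra)) as H2.
  pose proof (epsj j ltac:(lia)) as E1. pose proof (epsj (j - 1) ltac:(lia)) as E0.
  rewrite minus_INR in E0 by lia. replace (INR 1) with 1 in E0 by reflexivity.
  fold A in E0. fold d in E0, E1.
  replace (A + (s - 1 / 2) * tau - A) with ((s - 1 / 2) * tau) in H1 by field.
  replace (INR j * tau - A) with tau in H2 by (unfold A; field).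
  set (R1 := p2 (A + (s - 1 / 2) * tau) - p2 A - p3 A * ((s - 1 / 2) * tau)) in H1.
  set (R2 := p2 (INR j * tau) - p2 A - p3 A * tau) in H2.
  set (e0 := d (j - 1)%nat - p2 A) in E0.
  set (e1 := d j - p2 (INR j * tau)) in E1.
  replace (p2 (A + (s - 1 / 2) * tau) - (d j * (s - 1 / 2) + d (j - 1)%nat * (3 / 2 - s)))
    with (R1 + (- (s - 1 / 2)) * (R2 + e1) + (- (3 / 2 - s)) * e0)
    by (unfold R1, R2, e0, e1; field).
  assert (B1 : Rabs (- (s - 1 / 2)) <= 1 / 2) by (rewrite Rabs_Ropp; apply Rabs_le; lra).
  assert (B2 : Rabs (- (3 / 2 - s)) <= 3 / 2) by (rewrite Rabs_Ropp; apply Rabs_le; lra).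
  assert (B3 : Rabs (R2 + e1) <= M * tau ^ 2 / 2 + M * tau ^ 2 / 12).
  { eapply Rle_trans; [apply Rabs_triang|]. replace (tau ^ 2) with (tau ^ 2) in H2 by ring. lra. }
  assert (T2 := abs_mul_le _ _ _ _ B1 B3).
  assert (T3 := abs_mul_le _ _ _ _ B2 E0).
  assert (HR1 : M * ((s - 1 / 2) * tau) ^ 2 / 2 <= M * tau ^ 2 / 8).
  { assert (Hq : (s - 1 / 2) ^ 2 <= 1 / 4) by nra.
    replace (((s - 1 / 2) * tau) ^ 2) with ((s - 1 / 2) ^ 2 * tau ^ 2) by ring.
    assert (Ht2 : 0 <= tau ^ 2) by apply pow2_ge_0.
    assert (Hq2 : (s - 1 / 2) ^ 2 * tau ^ 2 <= tau ^ 2 / 4) by nra.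
    apply Rmult_le_compat_l with (r := M) in Hq2; [|lra]. lra. }
  eapply Rle_trans; [apply Rabs_triang|].
  eapply Rle_trans; [apply Rplus_le_compat; [apply Rabs_triang|apply Rle_refl]|].
  assert (0 <= M * tau ^ 2) by (apply Rmult_le_pos; [lra|apply pow2_ge_0]).
  lra.
Qed.

Lemma coef_aj j : (j <> 1)%nat -> coef_a alpha tau k j =
  Rpower tau g * RInt (fun s => (s - 1 / 2) * Rpower (INR k + sg - INR j + 3 / 2 - s) (g - 1)) 0 1.
Proof.
  intros Hj. unfold coef_a. replace (Nat.eqb j 1) with false by (symmetry; apply Nat.eqb_neq; auto).
  cbv zeta. fold sg. unfold g. replace (2 - alpha - 1) with (1 - alpha) by ring. reflexivity.
Qed.

Lemma coef_bj j : (j <> k)%nat -> coef_b alpha tau k j =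
  Rpower tau g * RInt (fun s => (3 / 2 - s) * Rpower (INR k + sg - INR j + 1 / 2 - s) (g - 1)) 0 1.
Proof.
  intros Hj. unfold coef_b. replace (Nat.eqb j k) with false by (symmetry; apply Nat.eqb_neq; auto).
  cbv zeta. fold sg. unfold g. replace (2 - alpha - 1) with (1 - alpha) by ring. reflexivity.
Qed.

Lemma piecej_final j : (2 <= j <= k)%nat ->
  let K := INR k + sg - INR j + 3 / 2 in
  Rabs (RInt (fun u => P2 u * Rpower (c - u) (g - 1)) ((INR j - 3 / 2) * tau) ((INR j - 1 / 2) * tau)
        - (coef_a alpha tau k j * d j + coef_b alpha tau k (j - 1) * d (j - 1)%nat))
  <= 5 / 6 * M * tau ^ 2 * (Rpower tau g * ((Rpower K g - Rpower (K - 1) g) / g)).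
Proof.
  intros Hj K. assert (Hk1 := k_ge1). assert (Hg := g_bounds). assert (Hsg := sg_eq).
  assert (Hjk : INR j <= INR k) by (apply le_INR; lia).
  assert (HK : 1 < K) by (unfold K; lra).
  set (a := (INR j - 3 / 2) * tau).
  replace c with (a + K * tau) by (unfold c, K, a; field).
  replace ((INR j - 1 / 2) * tau) with (a + 1 * tau) by (unfold a; field).
  rewrite (cov P2 a tau K 1 g Ht ltac:(lra) P2_cont).
  rewrite coef_aj by lia. rewrite coef_bj by lia. fold K.
  rewrite minus_INR by lia. replace (INR 1) with 1 by reflexivity.
  rewrite (RInt_ext (V := R_CompleteNormedModule) (fun s => (3 / 2 - s) * Rpower (INR k + sg - (INR j - 1) + 1 / 2 - s) (g - 1))
             (fun s => (3 / 2 - s) * Rpower (K - s) (g - 1))).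
  2: { intros x _. unfold K. match goal with |- ?a = ?b => change (@eq R a b) end.
       replace (INR k + sg - (INR j - 1) + 1 / 2 - x) with (INR k + sg - INR j + 3 / 2 - x) by field. reflexivity. }
  fold K.
  set (w := fun s => Rpower (K - s) (g - 1)).
  set (L := fun s => d j * (s - 1 / 2) + d (j - 1)%nat * (3 / 2 - s)).
  assert (HL : Rpower tau g * RInt (fun s => (s - 1 / 2) * w s) 0 1 * d j +
               Rpower tau g * RInt (fun s => (3 / 2 - s) * w s) 0 1 * d (j - 1)%nat
             = Rpower tau g * RInt (fun s => L s * w s) 0 1).
  { rewrite (RInt_ext (V := R_CompleteNormedModule) (fun s => L s * w s) (fun s => (d j) * ((s - 1 / 2) * w s) + (d (j - 1)%nat) * ((3 / 2 - s) * w s))).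
    2: { intros; unfold L; match goal with |- ?a = ?b => change (@eq R a b) end; ring. }
    rewrite RInt_lin2.
    - ring.
    - apply (ex_fw (fun s => s - 1 / 2)); [lra|]. intros; apply (cont_affine (-1/2) 1); rring.
    - apply (ex_fw (fun s => 3 / 2 - s)); [lra|]. intros; apply (cont_affine (3/2) (-1)); rring. }
  unfold w in HL. rewrite HL.
  rewrite <- Rmult_minus_distr_l. rewrite Rabs_mult, (Rabs_pos_eq (Rpower tau g)) by (left; apply rp_pos; lra).
  assert (Hp := piece_est (fun s => P2 (a + s * tau)) L K 1 (5 / 6 * M * tau ^ 2) g ltac:(lra) ltac:(lra)
     (F_cont a) ltac:(intros; apply (cont_affine (- 1 / 2 * d j + 3 / 2 * d (j - 1)%nat) (d j - d (j - 1)%nat)); unfold L; rring)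
     ltac:(intros; unfold a, L; apply piecej_point; auto)).
  assert (0 < Rpower tau g) by (apply rp_pos; lra).
  apply (Rmult_le_compat_l (Rpower tau g)) in Hp; [|lra].
  eapply Rle_trans; [exact Hp|]. right; ring.
Qed.


Fixpoint sab (m : nat) : R :=
  match m with
  | O => 0
  | S m' => sab m' + (coef_a alpha tau k (S m') + coef_b alpha tau k (S m')) * d (S m')
  end.

Lemma sum_rev (f : nat -> R) n : sum_f_R0 (fun l => f (n - l)%nat) n = sum_f_R0 f n.
Proof.
  induction n as [|n IH].
  - simpl. reflexivity.
  - rewrite decomp_sum by lia. simpl pred. rewrite tech5.
    replace (S n - 0)%nat with (S n) by lia.
    rewrite (sum_eq (fun i => f (S n - S i)%nat) (fun i => f (n - i)%nat)) by (intros; f_equal).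
    rewrite IH. ring.
Qed.

Lemma coef_c_lt l : (l < k)%nat -> coef_c alpha tau k l = coef_a alpha tau k (k - l) + coef_b alpha tau k (k - l).
Proof.
  intros Hl. unfold coef_c. replace (Nat.ltb l k) with true by (symmetry; apply Nat.ltb_lt; auto).
  cbv zeta. reflexivity.
Qed.

Lemma disc_sum : sum_f_R0 (fun l => coef_c alpha tau k l * dt2 p (p1 0) tau (k - l)) k
  = coef_c alpha tau k k * d 0 + sab k.
Proof.
  set (h := fun j => coef_c alpha tau k (k - j) * d j).
  rewrite (sum_eq _ (fun l => h (k - l)%nat)).
  2: { intros i Hi. unfold h. replace (k - (k - i))%nat with i by lia. reflexivity. }
  rewrite sum_rev.
  assert (forall m, (m <= k)%nat -> sum_f_R0 h m = coef_c alpha tau k k * d 0 + sab m).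
  { induction m as [|m IH]; intros Hm.
    - cbn [sum_f_R0 sab]. unfold h. rewrite Nat.sub_0_r. ring.
    - rewrite tech5, IH by lia. cbn [sab]. unfold h.
      rewrite (coef_c_lt (k - S m)) by lia. replace (k - (k - S m))%nat with (S m) by lia. ring. }
  apply H. lia.
Qed.

Lemma ex_P2w a b : 0 <= a -> a <= b -> b < c -> ex_RInt (fun u => P2 u * Rpower (c - u) (g - 1)) a b.
Proof.
  intros Ha0 Hab Hb. apply exR_cont. intros z Hz. rewrite Rmin_left, Rmax_right in Hz by lra.
  apply cont_mul; [apply P2_cont|]. apply cont_rpK. lra.
Qed.

Lemma err_ind m : (1 <= m <= k)%nat ->
  Rabs (RInt (fun u => P2 u * Rpower (c - u) (g - 1)) 0 ((INR m - 1 / 2) * tau)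
        - (coef_c alpha tau k k * d 0 + sab m - coef_b alpha tau k m * d m))
  <= 5 / 6 * M * tau ^ 2 * (Rpower tau g * ((Rpower (INR k + sg) g - Rpower (INR k + sg - INR m + 1 / 2) g) / g)).
Proof.
  assert (Hk1 := k_ge1). assert (Hg := g_bounds). assert (Hsg := sg_eq).
  induction m as [|m IH]; intros Hm; [lia|].
  destruct (Nat.eq_dec m 0) as [->|Hm0].
  - cbn [sab]. replace ((INR 1 - 1 / 2) * tau) with (tau / 2) by (simpl; field).
    replace (INR k + sg - INR 1 + 1 / 2) with (INR k + sg - 1 / 2) by (simpl; field).
    replace (coef_c alpha tau k k * d 0 + (0 + (coef_a alpha tau k 1 + coef_b alpha tau k 1) * d 1) - coef_b alpha tau k 1 * d 1)
      with (coef_a alpha tau k 1 * d 1 + coef_c alpha tau k k * d 0) by ring.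
    apply piece1_final.
  - assert (Hmk : INR (S m) <= INR k) by (apply le_INR; lia).
    assert (Hm1 : 1 <= INR m) by (replace 1 with (INR 1) by reflexivity; apply le_INR; lia).
    rewrite S_INR in Hmk.
    specialize (IH ltac:(lia)).
    pose proof (piecej_final (S m) ltac:(lia)) as P. cbv zeta in P.
    rewrite S_INR in P. replace (S m - 1)%nat with m in P by lia.
    replace (INR m + 1 - 3 / 2) with (INR m - 1 / 2) in P by field.
    rewrite <- (RInt_Chasles (V := R_CompleteNormedModule) _ 0 ((INR m - 1 / 2) * tau)).
    2: { apply ex_P2w; try nra. unfold c. assert (0 < sg) by lra. nra. }
    2: { rewrite S_INR. apply ex_P2w; try nra. unfold c. assert (0 < sg) by lra. nra. }
    cbn [sab]. rewrite S_INR.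
    match goal with |- Rabs (plus ?X ?Y - ?Z) <= _ => change (Rabs (X + Y - Z) <= 5 / 6 * M * tau ^ 2 * (Rpower tau g * ((Rpower (INR k + sg) g - Rpower (INR k + sg - (INR m + 1) + 1 / 2) g) / g))) end.
    set (X := RInt (fun u => P2 u * Rpower (c - u) (g - 1)) 0 ((INR m - 1 / 2) * tau)) in *.
    set (Y := RInt (fun u => P2 u * Rpower (c - u) (g - 1)) ((INR m - 1 / 2) * tau) ((INR m + 1 - 1 / 2) * tau)) in *.
    replace (X + Y - (coef_c alpha tau k k * d 0 + (sab m + (coef_a alpha tau k (S m) + coef_b alpha tau k (S m)) * d (S m)) - coef_b alpha tau k (S m) * d (S m)))
      with ((X - (coef_c alpha tau k k * d 0 + sab m - coef_b alpha tau k m * d m)) + (Y - (coef_a alpha tau k (S m) * d (S m) + coef_b alpha tau k m * d m))) by ring.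
    eapply Rle_trans; [apply Rabs_triang|].
    replace (INR k + sg - INR m + 1 / 2) with (INR k + sg - (INR m + 1) + 3 / 2) in IH by field.
    replace (INR k + sg - (INR m + 1) + 1 / 2) with (INR k + sg - (INR m + 1) + 3 / 2 - 1) by field.
    eapply Rle_trans; [apply Rplus_le_compat; [exact IH|exact P]|].
    right. field. lra.
Qed.


Let P3 := clampf 0 T1 p3.
Let aL := (INR k - 1 / 2) * tau.
Let tk := INR k * tau.
Let H := c - aL.

Lemma P3_cont x : continuous P3 x.
Proof.
  unfold P3. apply clamp_cont; [apply T1_pos|]. destruct HC as [_ [_ [_ [D3 _]]]]. eapply deriv_cont; eauto.
Qed.

Lemma P3_eq x : 0 <= x <= T1 -> P3 x = p3 x.
Proof. intros; unfold P3; apply clamp_eq; auto. Qed.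

Lemma H_eq : H = (sg + 1 / 2) * tau.
Proof. unfold H, c, aL. field. Qed.

Definition rho (u : R) := P2 u - P2 tk - P3 tk * (u - tk).

Lemma rho_cont u : continuous rho u.
Proof.
  unfold rho. apply (cont_plus (fun u => P2 u - P2 tk) (fun u => - (P3 tk * (u - tk)))).
  - apply (cont_plus P2 (fun _ => - P2 tk)). apply P2_cont. apply cont_cst.
  - apply (cont_affine (P3 tk * tk) (- P3 tk)). rring.
Qed.

Lemma rho_bound u : (INR k - 3 / 4) * tau <= u <= c -> Rabs (rho u) <= M * (u - tk) ^ 2 / 2.
Proof.
  intros Hu. assert (Hk1 := k_ge1). assert (HT := T1_eq). assert (Hg := g_bounds). assert (Hsg := sg_eq).
  assert (Hc : c < T1) by (rewrite HT; unfold c; nra).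
  unfold rho. rewrite P2_eq by (split; nra). rewrite P2_eq by (unfold tk; split; nra).
  rewrite P3_eq by (unfold tk; split; nra).
  apply (tay2 0 T1 p p1 p2 p3 p4 M HC HM); unfold tk; split; nra.
Qed.

Lemma isd_Gw (Q u : R) : u < c -> is_derive (fun t => - Q / g * Rpower (c - t) g) u (Q * Rpower (c - u) (g - 1)).
Proof.
  intros Hu. assert (Hg := g_bounds).
  apply (isd_ext (fun t => - Q / g * Rpower (c - t) g) _ u (- Q / g * - (g * Rpower (c - u) (g - 1)))).
  - auto.
  - field; lra.
  - apply isd_scal. apply isd_rpK. auto.
Qed.

Lemma lim_Gw (Q : R) : filterlim (fun t => - Q / g * Rpower (c - t) g) (at_left c) (locally 0).
Proof. assert (Hg := g_bounds). apply lim_scal0. apply _. apply rp_lim_left. lra. Qed.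

Lemma aL_lt_c : aL < c.
Proof. assert (Hg := g_bounds). assert (Hsg := sg_eq). unfold aL, c. nra. Qed.

Lemma at_left_D (lo : R) : lo < c -> at_left c (fun u => lo < u < c).
Proof.
  intros Hlo. assert (Hp : 0 < c - lo) by lra.
  exists (mkposreal _ Hp). intros y Hy Hyc. change (Rabs (y - c) < c - lo) in Hy.
  destruct (Rabs_def2 _ _ Hy). split; lra.
Qed.

Lemma rho_int_exists : exists Ir,
  is_RInt_gen (fun u => rho u * Rpower (c - u) (g - 1)) (at_point aL) (at_left c) Ir /\
  Rabs Ir <= M * tau ^ 2 / 8 * (Rpower H g / g).
Proof.
  assert (Hk1 := k_ge1). assert (Hg := g_bounds). assert (Hsg := sg_eq). assert (HM0 := M_nonneg).
  assert (HaL := aL_lt_c).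
  set (D := fun u => aL - tau / 4 < u < c).
  destruct (cmp_exists (at_point aL) (at_left c) (at_point_filter aL) (at_left_proper_filter c)
     (fun u => rho u * Rpower (c - u) (g - 1)) (fun u => M * tau ^ 2 / 2 * Rpower (c - u) (g - 1))
     (fun t => - (M * tau ^ 2 / 2) / g * Rpower (c - t) g) D (- (M * tau ^ 2 / 2) / g * Rpower (c - aL) g) 0)
    as [Ir HIr].
  - intros x y z Hx Hz Hy. unfold D in *. lra.
  - unfold at_point, D. lra.
  - apply at_left_D. lra.
  - intros x Hx. unfold D in Hx. apply cont_mul; [apply rho_cont|apply cont_rpK; lra].
  - intros x Hx. unfold D in Hx. apply isd_Gw. lra.
  - intros x Hx. unfold D in Hx. apply (cont_mul (fun _ => M * tau ^ 2 / 2)); [apply cont_cst|apply cont_rpK; lra].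
  - intros x Hx. unfold D in Hx. rewrite Rabs_mult. rewrite (Rabs_pos_eq (Rpower _ _)) by (left; apply rp_pos; lra).
    apply Rmult_le_compat_r; [left; apply rp_pos; lra|].
    eapply Rle_trans; [apply rho_bound; unfold aL in Hx; split; lra|].
    assert ((x - tk) ^ 2 <= tau ^ 2).
    { unfold aL, tk in Hx. assert (Hsg2 : sg < 1 / 2) by lra.
      assert (Hst : 0 < sg * tau < tau / 2) by (split; nra).
      assert (- tau <= x - tk <= tau) by (unfold c in Hx; unfold tk; split; lra).
      assert (tau ^ 2 - (x - tk) ^ 2 = (tau - (x - tk)) * (tau + (x - tk))) by ring. nra. }
    apply Rmult_le_compat_r with (r := M / 2) in H0; [|lra]. lra.
  - apply (lim_at_point (fun t => - (M * tau ^ 2 / 2) / g * Rpower (c - t) g) aL).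
  - apply lim_Gw.
  - exists Ir. split; auto.
    apply (gen_bound (fun u => rho u * Rpower (c - u) (g - 1)) _ _ (at_point_filter aL) (at_left_proper_filter c) Ir); auto.
    apply (Filter_prod _ _ _ (fun a => a = aL) (fun b => aL < b < c)).
    + reflexivity.
    + apply at_left_D. auto.
    + intros a b Ha0 Hb0 v Hv. simpl in Hv. subst a.
      rewrite <- (is_RInt_unique _ _ _ _ Hv).
      set (D' := fun u => aL <= u < c).
      destruct (int_dom_bound (fun u => rho u * Rpower (c - u) (g - 1)) (fun u => M * tau ^ 2 / 8 * Rpower (c - u) (g - 1))
         (fun t => - (M * tau ^ 2 / 8) / g * Rpower (c - t) g) D' aL b) as [_ B].
      * intros x y z Hx Hz Hy. unfold D' in *. lra.
      * unfold D'. lra.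
      * unfold D'. lra.
      * intros x Hx. unfold D' in Hx. apply cont_mul; [apply rho_cont|apply cont_rpK; lra].
      * intros x Hx. unfold D' in Hx. apply isd_Gw. lra.
      * intros x Hx. unfold D' in Hx. apply (cont_mul (fun _ => M * tau ^ 2 / 8)); [apply cont_cst|apply cont_rpK; lra].
      * intros x Hx. unfold D' in Hx. rewrite Rabs_mult. rewrite (Rabs_pos_eq (Rpower _ _)) by (left; apply rp_pos; lra).
        apply Rmult_le_compat_r; [left; apply rp_pos; lra|].
        eapply Rle_trans; [apply rho_bound; unfold aL in Hx; split; lra|].
        assert ((x - tk) ^ 2 <= tau ^ 2 / 4).
        { unfold aL, tk in Hx. assert (Hsg2 : sg < 1 / 2) by lra.
          assert (Hst : 0 < sg * tau < tau / 2) by (split; nra).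
          assert (- (tau / 2) <= x - tk <= tau / 2) by (unfold c in Hx; unfold tk; split; lra).
          assert (tau ^ 2 / 4 - (x - tk) ^ 2 = (tau / 2 - (x - tk)) * (tau / 2 + (x - tk))) by field. nra. }
        apply Rmult_le_compat_r with (r := M / 2) in H0; [|lra]. lra.
      * eapply Rle_trans; [exact B|].
        assert (0 < Rpower (c - b) g) by (apply rp_pos; lra).
        assert (0 <= M * tau ^ 2 / 8) by (apply Rmult_le_pos; [apply Rmult_le_pos; [lra|apply pow2_ge_0]|lra]).
        rewrite Rabs_pos_eq.
        -- unfold H. apply Rminus_le_0. field_simplify; [|lra].
           apply Rmult_le_pos; [|left; apply Rinv_0_lt_compat; lra].
           assert (0 <= M * tau ^ 2) by (apply Rmult_le_pos; [lra|apply pow2_ge_0]).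
           nra.
        -- apply Rminus_le_0. field_simplify; [|lra].
           assert (Rpower (c - b) g <= Rpower (c - aL) g) by (apply rp_le_base; lra).
           apply Rmult_le_pos; [|left; apply Rinv_0_lt_compat; lra]. nra.
Qed.


Lemma w_int : is_RInt_gen (fun u => Rpower (c - u) (g - 1)) (at_point aL) (at_left c) (Rpower H g / g).
Proof.
  assert (Hg := g_bounds). assert (HaL := aL_lt_c).
  replace (Rpower H g / g) with (0 - (- 1 / g * Rpower (c - aL) g)) by (unfold H; field; lra).
  apply (gen_from_anti _ _ _ _ (fun u => Rpower (c - u) (g - 1)) (fun t => - 1 / g * Rpower (c - t) g) (fun u => u < c)).
  - intros x y z Hx Hz Hy; lra.
  - unfold at_point. auto.
  - exists (mkposreal 1 Rlt_0_1). intros y _ Hy; auto.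
  - intros x Hx. apply (isd_ext (fun t => - 1 / g * Rpower (c - t) g) _ x (1 * Rpower (c - x) (g - 1))); [auto|ring|].
    apply isd_Gw; auto.
  - intros x Hx. apply cont_rpK; auto.
  - apply (lim_at_point (fun t => - 1 / g * Rpower (c - t) g) aL).
  - apply lim_Gw.
Qed.

Lemma lin_int : is_RInt_gen (fun u => (u - tk) * Rpower (c - u) (g - 1)) (at_point aL) (at_left c) 0.
Proof.
  assert (Hg := g_bounds). assert (HaL := aL_lt_c). assert (Hsg := sg_eq).
  set (G2 := fun t => - (c - tk) / g * Rpower (c - t) g + / (g + 1) * Rpower (c - t) (g + 1)).
  assert (HG2 : G2 aL = 0).
  { unfold G2. replace (c - aL) with H by reflexivity. rewrite H_eq.
    replace (g + 1) with (g + 1) by ring. rewrite Rpower_plus, Rpower_1 by (rewrite <- H_eq; unfold H; lra).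
    replace (c - tk) with (sg * tau) by (unfold c, tk; ring). rewrite Hsg. field. lra. }
  replace 0 with (0 - G2 aL) by (rewrite HG2; ring).
  apply (gen_from_anti _ _ _ _ _ G2 (fun u => u < c)).
  - intros x y z Hx Hz Hy; lra.
  - unfold at_point. auto.
  - exists (mkposreal 1 Rlt_0_1). intros y _ Hy; auto.
  - intros x Hx. unfold G2.
    apply (isd_ext (fun t => - (c - tk) / g * Rpower (c - t) g + / (g + 1) * Rpower (c - t) (g + 1)) _ x
      (- (c - tk) / g * - (g * Rpower (c - x) (g - 1)) + / (g + 1) * - ((g + 1) * Rpower (c - x) (g + 1 - 1)))).
    + auto.
    + replace (g + 1 - 1) with ((g - 1) + 1) by ring. rewrite Rpower_plus, Rpower_1 by lra.
      replace (x - tk) with ((c - tk) - (c - x)) by ring. field. lra.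
    + apply isd_plus; apply isd_scal; apply isd_rpK; auto.
  - intros x Hx. apply (cont_mul (fun u => u - tk)). apply (cont_affine (- tk) 1); rring. apply cont_rpK; auto.
  - apply (lim_at_point G2 aL).
  - replace 0 with (0 + 0) by ring. unfold G2.
    apply (filterlim_comp_2 (G := locally 0) (H := locally 0) (fun t => - (c - tk) / g * Rpower (c - t) g) (fun t => / (g + 1) * Rpower (c - t) (g + 1)) Rplus).
    + apply lim_Gw.
    + apply lim_scal0. apply _. apply rp_lim_left. lra.
    + apply (filterlim_plus (0:R) (0:R)).
Qed.


Lemma last_piece : exists I,
  is_RInt_gen (fun u => P2 u * Rpower (c - u) (g - 1)) (at_point aL) (at_left c) I /\
  Rabs (I - Rpower H g / g * d k) <= 5 / 24 * M * tau ^ 2 * (Rpower H g / g).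
Proof.
  assert (Hg := g_bounds). assert (HaL := aL_lt_c). assert (Hk1 := k_ge1). assert (HT := T1_eq).
  destruct rho_int_exists as [Ir [HIr BIr]].
  pose proof (is_RInt_gen_scal _ (P2 tk) _ w_int) as H1.
  pose proof (is_RInt_gen_scal _ (P3 tk) _ lin_int) as H2.
  pose proof (is_RInt_gen_plus _ _ _ _ HIr H1) as H3.
  pose proof (is_RInt_gen_plus _ _ _ _ H3 H2) as H4.
  exists (plus (plus Ir (scal (P2 tk) (Rpower H g / g))) (scal (P3 tk) 0)). split.
  - apply (is_RInt_gen_ext (fun y => plus (plus (rho y * Rpower (c - y) (g - 1)) (scal (P2 tk) (Rpower (c - y) (g - 1)))) (scal (P3 tk) ((y - tk) * Rpower (c - y) (g - 1))))); auto.
    apply (Filter_prod _ _ _ (fun _ => True) (fun _ => True)).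
    + unfold at_point; auto.
    + exists (mkposreal 1 Rlt_0_1); auto.
    + intros a b _ _ x _. change ((rho x * Rpower (c - x) (g - 1) + P2 tk * Rpower (c - x) (g - 1)) + P3 tk * ((x - tk) * Rpower (c - x) (g - 1)) = P2 x * Rpower (c - x) (g - 1)).
      unfold rho. ring.
  - change (Rabs (Ir + P2 tk * (Rpower H g / g) + P3 tk * 0 - Rpower H g / g * d k) <= 5 / 24 * M * tau ^ 2 * (Rpower H g / g)).
    replace (Ir + P2 tk * (Rpower H g / g) + P3 tk * 0 - Rpower H g / g * d k)
      with (Ir + (Rpower H g / g) * (- (d k - p2 (INR k * tau)))) by (unfold tk; rewrite P2_eq; [ring|split; nra]).
    assert (E := epsj k ltac:(lia)). fold d in E.
    assert (Hp : 0 <= Rpower H g / g).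
    { apply Rmult_le_pos; [left; apply rp_pos; unfold H; lra|left; apply Rinv_0_lt_compat; lra]. }
    eapply Rle_trans; [apply Rabs_triang|]. rewrite Rabs_mult, Rabs_Ropp, (Rabs_pos_eq (Rpower H g / g)) by auto.
    apply Rmult_le_compat_l with (r := Rpower H g / g) in E; auto. lra.
Qed.

Lemma coef_bk : coef_b alpha tau k k = Rpower H g / g.
Proof.
  assert (Hg := g_bounds). assert (Hsg := sg_eq).
  unfold coef_b. rewrite Nat.eqb_refl. cbv zeta. fold sg.
  assert (Hb : is_RInt_gen (fun s => Rpower s (1 - alpha)) (at_right 0) (at_point (sg + 1 / 2)) (Rpower (sg + 1 / 2) g / g)).
  { replace (Rpower (sg + 1 / 2) g / g) with (/ g * Rpower (sg + 1 / 2) g - 0) by (field; lra).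
    apply (gen_from_anti _ _ _ _ _ (fun t => / g * Rpower t g) (fun u => 0 < u)).
    - intros x y z Hx Hz Hy; lra.
    - exists (mkposreal 1 Rlt_0_1). intros y _ Hy; auto.
    - unfold at_point; lra.
    - intros x Hx. apply (isd_ext (fun t => / g * Rpower t g) _ x (/ g * (g * Rpower x (g - 1)))); [auto| |].
      + unfold g. replace (2 - alpha - 1) with (1 - alpha) by ring. field. unfold g in Hg; lra.
      + apply isd_scal. apply is_derive_rp; auto.
    - intros x Hx. eapply cont_of_derive. apply is_derive_rp; auto.
    - apply lim_scal0. apply _. apply rp_lim_right. lra.
    - apply (lim_at_point (fun t => / g * Rpower t g) (sg + 1 / 2)). }
  rewrite (is_RInt_gen_unique _ _ Hb).
  rewrite H_eq. fold g. rewrite <- Rpower_mult_distr by lra. field. lra.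
Qed.


Lemma main_est :
  Rabs (RInt_gen (fun s => p2 s * Rpower (c - s) (1 - alpha)) (at_point 0) (at_left c)
        - sum_f_R0 (fun l => coef_c alpha tau k l * dt2 p (p1 0) tau (k - l)) k)
  <= M * (5 * Rpower c g / 6 * tau ^ 2 - 5 / 8 * Rpower (sg + 1 / 2) g * Rpower tau (4 - alpha)) / g.
Proof.
  assert (Hg := g_bounds). assert (HaL := aL_lt_c). assert (Hk1 := k_ge1). assert (HT := T1_eq).
  assert (Hsg := sg_eq). assert (HM0 := M_nonneg).
  destruct last_piece as [I [HI BI]].
  assert (HaL0 : 0 <= aL) by (unfold aL; nra).
  assert (H0 : is_RInt_gen (fun u => P2 u * Rpower (c - u) (g - 1)) (at_point 0) (at_point aL)
                 (RInt (fun u => P2 u * Rpower (c - u) (g - 1)) 0 aL)).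
  { apply is_RInt_gen_at_point. apply (RInt_correct (V := R_CompleteNormedModule)). apply ex_P2w; lra. }
  pose proof (is_RInt_gen_Chasles _ _ _ _ H0 HI) as Hall.
  assert (Hall' : is_RInt_gen (fun s => p2 s * Rpower (c - s) (1 - alpha)) (at_point 0) (at_left c)
                 (plus (RInt (fun u => P2 u * Rpower (c - u) (g - 1)) 0 aL) I)).
  { apply (is_RInt_gen_ext (fun u => P2 u * Rpower (c - u) (g - 1))); auto.
    apply (Filter_prod _ _ _ (fun a => a = 0) (fun b => 0 < b < c)).
    - reflexivity.
    - apply at_left_D. unfold c; nra.
    - intros a b Ha0 Hb0 x Hx. simpl in Ha0, Hx. subst a. rewrite Rmin_left, Rmax_right in Hx by lra.
      change (P2 x * Rpower (c - x) (g - 1) = p2 x * Rpower (c - x) (1 - alpha)).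
      rewrite P2_eq by (split; [lra|]; rewrite HT; unfold c in Hb0; nra).
      unfold g. replace (2 - alpha - 1) with (1 - alpha) by ring. reflexivity. }
  rewrite (is_RInt_gen_unique _ _ Hall').
  rewrite disc_sum.
  pose proof (err_ind k ltac:(lia)) as E1.
  replace ((INR k - 1 / 2) * tau) with aL in E1 by reflexivity.
  replace (INR k + sg - INR k + 1 / 2) with (sg + 1 / 2) in E1 by ring.
  rewrite coef_bk in E1.
  change (plus (RInt (fun u => P2 u * Rpower (c - u) (g - 1)) 0 aL) I) with (RInt (fun u => P2 u * Rpower (c - u) (g - 1)) 0 aL + I).
  set (X := RInt (fun u => P2 u * Rpower (c - u) (g - 1)) 0 aL) in *.
  replace (X + I - (coef_c alpha tau k k * d 0 + sab k))
    with ((X - (coef_c alpha tau k k * d 0 + sab k - Rpower H g / g * d k)) + (I - Rpower H g / g * d k)) by ring.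
  eapply Rle_trans; [apply Rabs_triang|].
  eapply Rle_trans; [apply Rplus_le_compat; [exact E1|exact BI]|].
  assert (Hc1 : Rpower tau g * Rpower (INR k + sg) g = Rpower c g).
  { rewrite Rpower_mult_distr by lra. f_equal. unfold c; ring. }
  assert (Hc2 : Rpower tau g * Rpower (sg + 1 / 2) g = Rpower H g).
  { rewrite Rpower_mult_distr by lra. f_equal. rewrite H_eq. ring. }
  assert (Hc3 : Rpower tau (4 - alpha) = Rpower tau g * tau ^ 2).
  { replace (4 - alpha) with (g + INR 2) by (unfold g; simpl; ring).
    rewrite Rpower_plus, Rpower_pow by lra. reflexivity. }
  rewrite Hc3. right.
  replace (5 / 6 * M * tau ^ 2 * (Rpower tau g * ((Rpower (INR k + sg) g - Rpower (sg + 1 / 2) g) / g)))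
    with (5 / 6 * M * tau ^ 2 * ((Rpower tau g * Rpower (INR k + sg) g - Rpower tau g * Rpower (sg + 1 / 2) g) / g))
    by (field; lra).
  rewrite Hc1, Hc2.
replace (5 / 8 * Rpower (sg + 1 / 2) g * (Rpower tau g * tau ^ 2)) with (5 / 8 * Rpower H g * tau ^ 2) by (rewrite <- Hc2; ring). field. lra.
Qed.

End Main.

Lemma max_abs_bound (a b : R) (f : R -> R) : a <= b -> cont_on a b f ->
  forall x, a <= x <= b -> Rabs (f x) <= max_abs_on a b f.
Proof.
  intros Hab Hc.
  set (h := fun x => Rabs (clampf a b f x)).
  assert (Hh : forall x, continuity_pt h x).
  { intros x. unfold h. apply (continuity_pt_comp (clampf a b f) Rabs).
    - apply continuity_pt_filterlim. apply clamp_cont; auto.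
    - apply Rcontinuity_abs. }
  destruct (continuity_ab_maj h a b Hab (fun c _ => Hh c)) as [Mx [HMx HMx2]].
  assert (Hl : Lub_Rbar (fun y => exists t, a <= t <= b /\ y = Rabs (f t)) = Finite (Rabs (f Mx))).
  { apply is_lub_Rbar_unique. split.
    - intros y [t [Ht ->]]. simpl. specialize (HMx t Ht). unfold h in HMx.
      rewrite !clamp_eq in HMx by auto. auto.
    - intros bnd Hb. apply Hb. exists Mx. split; auto. }
  intros x Hx. unfold max_abs_on. rewrite Hl. simpl.
  specialize (HMx x Hx). unfold h in HMx. rewrite !clamp_eq in HMx by auto. auto.
Qed.

Theorem theorem1 (alpha T : R) (N k : nat) (p p1 p2 p3 p4 : R -> R) :
  1 < alpha < 2 -> 0 < T -> (0 < N)%nat ->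
  (1 <= k)%nat -> (k <= N - 1)%nat ->
  let sigma := 1 - alpha / 2 in
  let tau := T / INR N in
  let tks := INR k * tau + sigma * tau in
  C4_on 0 (INR (k + 1) * tau) p p1 p2 p3 p4 ->
  Rabs (caputo alpha p2 tks - discrete_caputo alpha tau p (p1 0) k)
  <= / Gamma (3 - alpha) * max_abs_on 0 (INR (k + 1) * tau) p4 *
     (5 * Rpower tks (2 - alpha) / 6 * tau ^ 2
      - 5 / 8 * Rpower (sigma + 1 / 2) (2 - alpha) * Rpower tau (4 - alpha)).
Proof.
  intros Ha HT HN Hk1 HkN sigma tau tks HC.
  assert (Htau : 0 < tau).
  { unfold tau. apply Rdiv_lt_0_compat; auto. apply lt_0_INR; auto. }
  assert (HT1 : 0 <= INR (k + 1) * tau) by (apply Rmult_le_pos; [apply pos_INR|lra]).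
  set (M := max_abs_on 0 (INR (k + 1) * tau) p4).
  assert (HM : forall x, 0 <= x <= INR (k + 1) * tau -> Rabs (p4 x) <= M).
  { intros x Hx. unfold M. apply max_abs_bound; auto. destruct HC as [_ [_ [_ [_ C4]]]]. auto. }
  set (z := 2 - alpha).
  assert (Hz : 0 < z < 1) by (unfold z; lra).
  destruct (gam_exists z Hz) as [l [Hl Hlpos]].
  assert (G2 : Gamma (2 - alpha) = l).
  { unfold Gamma. fold z. apply (is_RInt_gen_unique _ _ Hl). }
  assert (G3 : Gamma (3 - alpha) = z * l).
  { replace (3 - alpha) with (z + 1) by (unfold z; ring). unfold Gamma.
    apply (is_RInt_gen_unique _ _ (gam_rec z Hz l Hl)). }
  pose proof (main_est alpha tau k p p1 p2 p3 p4 M Ha Htau Hk1 HC HM) as E.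
  unfold caputo, discrete_caputo. rewrite G2, G3.
  replace (/ l * RInt_gen (fun s => p2 s * Rpower (tks - s) (1 - alpha)) (at_point 0) (at_left tks) -
           / l * sum_f_R0 (fun l0 => coef_c alpha tau k l0 * dt2 p (p1 0) tau (k - l0)) k)
    with (/ l * (RInt_gen (fun s => p2 s * Rpower (tks - s) (1 - alpha)) (at_point 0) (at_left tks) -
           sum_f_R0 (fun l0 => coef_c alpha tau k l0 * dt2 p (p1 0) tau (k - l0)) k)) by ring.
  rewrite Rabs_mult, Rabs_pos_eq by (left; apply Rinv_0_lt_compat; auto).
  unfold tks, sigma. unfold sigma_of in E. fold z in E |- *.
  eapply Rle_trans; [apply Rmult_le_compat_l; [left; apply Rinv_0_lt_compat; auto|exact E]|].
  right. field. split; lra.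
Qed.
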